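(* Fix any values of the utility parameters ($\beta$, $\alpha$, $\pi$) and of the discount factor $\delta\in(0,1)$. If the adversary is not restricted by timely punishments, then no protocol enforces accountability.
   Context: Model. There are $n$ agents $\mathcal N=\{1,\dots,n\}$ in a synchronous system with rounds $m=1,2,\dots$. Evolving graphs. An evolving graph is a sequence $G=(G^m)_{m\ge1}$ of undirected graphs on $\mathcal N$. Before execution an oblivious adversary fixes some $G\in\mathcal G^*$, where the set $\mathcal G^*$ of possible evolving graphs is common knowledge. At round $m$, before acting, agent $i$ learns a set $\mathcal G_i^m$ of graphs containing $G^m$; this at least determines $i$'s round-$m$ neighbours. Actions. In each round, every pair of neighbours $i,j$ simultaneously chooses an individual action toward each other: - defect: omit messages; - cooperate: send its value plus monitoring information; - punish: send messages while causing a utility loss to the other. Each learns the other's individual action only at the end of the round. A round-$m$ action of $i$ lists its individual actions toward all of its round-$m$ neighbours. A history is the sequence of past action profiles together with $G$. An information set $I_i$ of $i$ is the set of histories consistent with $i$'s observations, which are: the sets $\mathcal G_i^{m'}$, $i$'s own past actions, and the individual actions of neighbours toward $i$. Agents have perfect recall. $\mathcal I_i(G)$ denotes $i$'s information sets compatible with $G$. A strategy $\sigma_i$ maps each information set to a distribution over actions; a protocol is a strategy profile $\vec\sigma$. Utility. In each round, for each neighbour $j$, agent $i$ gets: - benefit $\beta$ if $j$ cooperates or punishes (and $i$ does not avoid a punishment); - cost $1$ if $i$ cooperates or punishes; - cost $\alpha\ge0$ for receiving $j$'s messages; - loss $\pi$ if $j$ punishes $i$. Utilities are discounted by $\delta\in(0,1)$.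 We write $u_i(\vec\sigma\mid G,h)$ for the expected sum over rounds $m'\ge m$ of $\delta^{m'-m}$ times the round-$m'$ utility, given a round-$m$ history $h$. Then $u_i(\vec\sigma\mid G,I_i)=\sum_{h\in I_i}\mu(h\mid G,I_i)\,u_i(\vec\sigma\mid G,h)$ for a belief system $\mu$. Consistent beliefs. A belief system $\mu$ is consistent with $\vec\sigma$ and $\mathcal G^*$ if there are completely mixed protocols $\vec\sigma^c\to\vec\sigma$ such that for all $G\in\mathcal G^*$, $i$, $I_i$ and $h\in I_i$, $$\mu(h\mid G,I_i)=\lim_c \Pr^{\vec\sigma^c}(h\mid G)\Big/\sum_{h'\in I_i}\Pr^{\vec\sigma^c}(h'\mid G).$$ Equilibrium. $\vec\sigma^*$ is a $\mathcal G^*$-Oblivious Adversary Perfect Equilibrium ($\mathcal G^*$-OAPE) if some such consistent $\mu^*$ satisfies, for all $G\in\mathcal G^*$, agents $i$, strategies $\sigma_i$ and $I_i\in\mathcal I_i(G)$, $$u_i(\vec\sigma^*\mid G,I_i)\ge u_i((\sigma_i,\vec\sigma^*_{-i})\mid G,I_i).$$ A protocol enforces accountability if (1) agents always cooperate until some agent deviates, and (2) it is a $\mathcal G^*$-OAPE. Causal influence. An $i$-edge of $G$ is a pair $(j,m)$ with $\{i,j\}$ an edge of $G^m$. $(j,m)\leadsto^G(l,m')$ means: $m<m'$ and there is a chain $j=o_0,o_1,\dots,o_k=l$ ($k\ge0$) and rounds $m\le m_1<\dots<m_k<m'$ with $\{o_{t-1},o_t\}$ an edge of $G^{m_t}$.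 $(j,m)\leadsto_i^G(l,m')$ means the same with no intermediate agent $o_t$ ($0\le t<k$) equal to $i$. Punishment opportunities. A punishment opportunity (PO) of $i$ for $i$-edge $(j,m)$ in $G$ is an $i$-edge $(l,m')$ with $(j,m)\leadsto_i^G(l,m')$. The adversary is restricted by timely punishments if there is $\rho>0$ such that for every $G\in\mathcal G^*$, agent $i$ and $i$-edge $(j,m)$ of $G$ there is a PO $(l,m')$ of $i$ for $(j,m)$ with $m'<m+\rho$. *)

(* Defs.v *)
From Stdlib Require Import Reals List Arith ClassicalEpsilon.
Import ListNotations.
Open Scope R_scope.

Definition Graph := nat -> nat -> bool.

Definition wf_graph (n : nat) (g : Graph) : Prop :=
  (forall i j, g i j = g j i) /\ (forall i, g i i = false) /\
  (forall i j, g i j = true -> (i < n)%nat /\ (j < n)%nat).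

(* Evolving graph: round m (paper's round m+1) graph is G m. *)
Definition EG := nat -> Graph.

Definition nbrs (n : nat) (g : Graph) (i : nat) : list nat :=
  filter (fun j => g i j) (seq 0 n).
Definition deg (n : nat) (g : Graph) (i : nat) : nat := length (nbrs n g i).

Fixpoint chain_avoid (G : EG) (i o lo : nat) (steps : list (nat * nat))
  (l m' : nat) : Prop :=
  match steps with
  | [] => o = l
  | (o', mt) :: rest =>
      o <> i /\ (lo <= mt)%nat /\ (mt < m')%nat /\ G mt o o' = true /\
      chain_avoid G i o' (S mt) rest l m'
  end.

Definition influences_avoiding (G : EG) (i j m l m' : nat) : Prop :=
  (m < m')%nat /\ exists steps, chain_avoid G i j m steps l m'.

Definition punishment_opportunity (G : EG) (i j m l m' : nat) : Prop :=
  G m' i l = true /\ influences_avoiding G i j m l m'.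

(* rho is a natural number: for integer rounds, "exists real rho > 0" with
   m' < m + rho is equivalent to "exists natural rho > 0". *)
Definition restricted_by_timely_punishments (Gs : EG -> Prop) : Prop :=
  exists rho : nat, (0 < rho)%nat /\
    forall G, Gs G -> forall i j m, G m i j = true ->
      exists l m', punishment_opportunity G i j m l m' /\ (m' < m + rho)%nat.

Inductive IAct := Defect | Coop | Punish.

(* an action of agent i at a round: list of individual actions toward its
   neighbours (in the order of nbrs) *)
Definition Action := list IAct.
(* an action profile: the list of actions of agents 0..n-1 *)
Definition Profile := list Action.
(* the profile part of a round-m history (rounds 0..m-1); the evolving graph
   is carried separately *)
Definition Hist := list Profile.

Fixpoint all_lists (k : nat) : list Action :=
  match k with
  | O => [[]]
  | S k => flat_map (fun a => map (cons a) (all_lists k)) [Defect; Coop; Punish]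
  end.

Fixpoint profiles_of (ds : list nat) : list Profile :=
  match ds with
  | [] => [[]]
  | d :: ds => flat_map (fun a => map (cons a) (profiles_of ds)) (all_lists d)
  end.

Definition round_profiles (n : nat) (G : EG) (k : nat) : list Profile :=
  profiles_of (map (fun i => deg n (G k) i) (seq 0 n)).

Fixpoint ext (n : nat) (G : EG) (m r : nat) : list Hist :=
  match r with
  | O => [[]]
  | S r => flat_map (fun a => map (cons a) (ext n G (S m) r)) (round_profiles n G m)
  end.

Definition hist (n : nat) (G : EG) (m : nat) : list Hist := ext n G 0 m.

Fixpoint index_of (j : nat) (l : list nat) : nat :=
  match l with
  | [] => O
  | x :: l => if Nat.eqb x j then O else S (index_of j l)
  end.

Definition act_toward (n : nat) (g : Graph) (i j : nat) (a : Action) : IAct :=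
  nth (index_of j (nbrs n g i)) a Defect.

Definition sends (x : IAct) : bool :=
  match x with Defect => false | _ => true end.
Definition is_punish (x : IAct) : bool :=
  match x with Punish => true | _ => false end.

Definition pair_utility (beta alpha pi : R) (x y : IAct) : R :=
  (if sends y then beta else 0) - (if sends x then 1 else 0)
  - (if sends y then alpha else 0) - (if is_punish y then pi else 0).

Definition sum_over {A} (l : list A) (f : A -> R) : R :=
  fold_right (fun x acc => f x + acc) 0 l.
Definition prod_over {A} (l : list A) (f : A -> R) : R :=
  fold_right (fun x acc => f x * acc) 1 l.
Definition sum_if {A} (l : list A) (P : A -> Prop) (f : A -> R) : R :=
  sum_over l (fun x => if excluded_middle_informative (P x) then f x else 0).

Definition round_utility (n : nat) (beta alpha pi : R) (g : Graph)
  (a : Profile) (i : nat) : R :=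
  sum_over (nbrs n g i) (fun j =>
    pair_utility beta alpha pi
      (act_toward n g i j (nth i a []))
      (act_toward n g j i (nth j a []))).

(* value of a convergent series (0 if it does not converge) *)
Definition series_value (f : nat -> R) : R :=
  match excluded_middle_informative (exists l, infinite_sum f l) with
  | left H => proj1_sig (constructive_indefinite_description _ H)
  | right _ => 0
  end.

(* K G i m = the set G_i^m of graphs learnt by i at round m when the adversary
   fixes G. *)
Definition Knowledge := EG -> nat -> nat -> Graph -> Prop.

Definition knowledge_wf (Gs : EG -> Prop) (K : Knowledge) : Prop :=
  forall G, Gs G -> forall i m,
    K G i m (G m) /\ (forall g, K G i m g -> forall j, g i j = G m i j).

(* A strategy maps (the graph and) a history to a distribution over actions;
   measurability w.r.t. information sets is imposed in valid_strategy. *)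
Definition Strategy := EG -> Hist -> Action -> R.
Definition Protocol := nat -> Strategy.

Definition obs_equiv (n : nat) (K : Knowledge) (i : nat)
  (G : EG) (p : Hist) (G' : EG) (p' : Hist) : Prop :=
  length p = length p' /\
  (forall k, (k <= length p)%nat -> forall g, K G i k g <-> K G' i k g) /\
  (forall k, (k < length p)%nat ->
     nth i (nth k p []) [] = nth i (nth k p' []) [] /\
     forall j, G k i j = true ->
       act_toward n (G k) j i (nth j (nth k p []) []) =
       act_toward n (G' k) j i (nth j (nth k p' []) [])).

Definition valid_strategy (n : nat) (Gs : EG -> Prop) (K : Knowledge) (i : nat)
  (s : Strategy) : Prop :=
  (forall G p, Gs G -> In p (hist n G (length p)) ->
     (forall a, In a (all_lists (deg n (G (length p)) i)) -> 0 <= s G p a) /\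
     sum_over (all_lists (deg n (G (length p)) i)) (s G p) = 1) /\
  (forall G p G' p', Gs G -> Gs G' ->
     In p (hist n G (length p)) -> In p' (hist n G' (length p')) ->
     obs_equiv n K i G p G' p' -> forall a, s G p a = s G' p' a).

Definition completely_mixed (n : nat) (Gs : EG -> Prop) (K : Knowledge) (i : nat)
  (s : Strategy) : Prop :=
  valid_strategy n Gs K i s /\
  forall G p a, Gs G -> In p (hist n G (length p)) ->
    In a (all_lists (deg n (G (length p)) i)) -> 0 < s G p a.

Definition valid_protocol (n : nat) (Gs : EG -> Prop) (K : Knowledge)
  (sigma : Protocol) : Prop :=
  forall i, (i < n)%nat -> valid_strategy n Gs K i (sigma i).

Definition deviate (sigma : Protocol) (i : nat) (s : Strategy) : Protocol :=
  fun j => if Nat.eqb j i then s else sigma j.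

Fixpoint prob_ext (n : nat) (sigma : Protocol) (G : EG) (p : Hist) (e : Hist) : R :=
  match e with
  | [] => 1
  | a :: e' =>
      prod_over (seq 0 n) (fun i => sigma i G p (nth i a [])) *
      prob_ext n sigma G (p ++ [a]) e'
  end.

Definition prob_hist (n : nat) (sigma : Protocol) (G : EG) (p : Hist) : R :=
  prob_ext n sigma G [] p.

Definition exp_round_utility (n : nat) (beta alpha pi : R) (sigma : Protocol)
  (G : EG) (p : Hist) (i t : nat) : R :=
  sum_over (ext n G (length p) (S t)) (fun e =>
    prob_ext n sigma G p e *
    round_utility n beta alpha pi (G (length p + t)%nat) (last e []) i).

Definition util (n : nat) (beta alpha pi delta : R) (sigma : Protocol)
  (G : EG) (p : Hist) (i : nat) : R :=
  series_value (fun t => delta ^ t * exp_round_utility n beta alpha pi sigma G p i t).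

(* A belief system: mu G i G0 p0 p = mu(h | G, I_i) where I_i is the
   information set of i containing the history (G0, p0), and h = (G, p). *)
Definition Beliefs := EG -> nat -> EG -> Hist -> Hist -> R.

Definition consistent_beliefs (n : nat) (Gs : EG -> Prop) (K : Knowledge)
  (sigma : Protocol) (mu : Beliefs) : Prop :=
  exists sigmac : nat -> Protocol,
    (forall c i, (i < n)%nat -> completely_mixed n Gs K i (sigmac c i)) /\
    (forall i G p a, (i < n)%nat -> Gs G -> In p (hist n G (length p)) ->
       In a (all_lists (deg n (G (length p)) i)) ->
       Un_cv (fun c => sigmac c i G p a) (sigma i G p a)) /\
    (forall G i G0 p0 p, Gs G -> (i < n)%nat -> Gs G0 ->
       In p0 (hist n G0 (length p0)) -> In p (hist n G (length p0)) ->
       obs_equiv n K i G p G0 p0 ->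
       Un_cv (fun c =>
                prob_hist n (sigmac c) G p /
                sum_if (hist n G (length p0)) (fun p' => obs_equiv n K i G p' G0 p0)
                       (prob_hist n (sigmac c) G))
             (mu G i G0 p0 p)).

Definition util_info (n : nat) (K : Knowledge) (beta alpha pi delta : R)
  (mu : Beliefs) (sigma : Protocol) (G : EG) (i : nat) (G0 : EG) (p0 : Hist) : R :=
  sum_if (hist n G (length p0)) (fun p => obs_equiv n K i G p G0 p0)
    (fun p => mu G i G0 p0 p * util n beta alpha pi delta sigma G p i).

Definition OAPE (n : nat) (Gs : EG -> Prop) (K : Knowledge) (beta alpha pi delta : R)
  (sigma : Protocol) : Prop :=
  valid_protocol n Gs K sigma /\
  exists mu, consistent_beliefs n Gs K sigma mu /\
    forall G i s G0 p0, Gs G -> (i < n)%nat -> valid_strategy n Gs K i s ->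
      Gs G0 -> In p0 (hist n G0 (length p0)) ->
      (* the information set of (G0,p0) is compatible with G *)
      (exists p, In p (hist n G (length p0)) /\ obs_equiv n K i G p G0 p0) ->
      util_info n K beta alpha pi delta mu sigma G i G0 p0 >=
      util_info n K beta alpha pi delta mu (deviate sigma i s) G i G0 p0.

Definition all_coop (p : Hist) : Prop :=
  Forall (fun a => Forall (Forall (fun x => x = Coop)) a) p.

Definition enforces_accountability (n : nat) (Gs : EG -> Prop) (K : Knowledge)
  (beta alpha pi delta : R) (sigma : Protocol) : Prop :=
  (forall G p i, Gs G -> In p (hist n G (length p)) -> all_coop p ->
     (i < n)%nat -> sigma i G p (repeat Coop (deg n (G (length p)) i)) = 1) /\
  OAPE n Gs K beta alpha pi delta sigma.

(* Main.v *)
Require Import Defs.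
From Stdlib Require Import Reals List Arith Lia Lra Classical ClassicalEpsilon Bool.
Import ListNotations.
Open Scope R_scope.

Lemma sum_over_nil {A} (f : A -> R) : sum_over [] f = 0.
Proof. reflexivity. Qed.
Lemma sum_over_cons {A} (x : A) l f : sum_over (x :: l) f = f x + sum_over l f.
Proof. reflexivity. Qed.
Lemma sum_over_app {A} (l1 l2 : list A) f :
  sum_over (l1 ++ l2) f = sum_over l1 f + sum_over l2 f.
Proof. induction l1; simpl; [lra|]. unfold sum_over in *; simpl. rewrite IHl1; lra. Qed.
Lemma sum_over_map {A B} (g : A -> B) l f :
  sum_over (map g l) f = sum_over l (fun x => f (g x)).
Proof. induction l; simpl; auto. unfold sum_over in *; simpl; rewrite IHl; auto. Qed.
Lemma sum_over_flat_map {A B} (g : A -> list B) l f :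
  sum_over (flat_map g l) f = sum_over l (fun x => sum_over (g x) f).
Proof. induction l; simpl; auto. rewrite sum_over_app, IHl. reflexivity. Qed.
Lemma sum_over_ext {A} (l : list A) f g :
  (forall x, In x l -> f x = g x) -> sum_over l f = sum_over l g.
Proof. induction l; intros H; simpl; auto. unfold sum_over in *; simpl.
  rewrite H by (left; auto). rewrite IHl; auto. intros; apply H; right; auto. Qed.
Lemma sum_over_scal {A} (l : list A) c f :
  sum_over l (fun x => c * f x) = c * sum_over l f.
Proof. induction l; simpl. unfold sum_over; simpl; lra. unfold sum_over in *; simpl; rewrite IHl; lra. Qed.
Lemma sum_over_scal_r {A} (l : list A) c f :
  sum_over l (fun x => f x * c) = sum_over l f * c.
Proof. induction l; simpl. unfold sum_over; simpl; lra. unfold sum_over in *; simpl; rewrite IHl; lra. Qed.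
Lemma sum_over_plus {A} (l : list A) f g :
  sum_over l (fun x => f x + g x) = sum_over l f + sum_over l g.
Proof. induction l; simpl. unfold sum_over; simpl; lra. unfold sum_over in *; simpl; rewrite IHl; lra. Qed.
Lemma sum_over_minus {A} (l : list A) f g :
  sum_over l (fun x => f x - g x) = sum_over l f - sum_over l g.
Proof. induction l; simpl. unfold sum_over; simpl; lra. unfold sum_over in *; simpl; rewrite IHl; lra. Qed.
Lemma sum_over_nonneg {A} (l : list A) f :
  (forall x, In x l -> 0 <= f x) -> 0 <= sum_over l f.
Proof. induction l; intros H; simpl. unfold sum_over; simpl; lra.
  unfold sum_over in *; simpl. assert (0 <= f a) by (apply H; left; auto).
  assert (0 <= fold_right (fun x acc => f x + acc) 0 l) by (apply IHl; intros; apply H; right; auto). lra. Qed.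
Lemma sum_over_le {A} (l : list A) f g :
  (forall x, In x l -> f x <= g x) -> sum_over l f <= sum_over l g.
Proof. induction l; intros H; simpl. unfold sum_over; simpl; lra.
  unfold sum_over in *; simpl. assert (f a <= g a) by (apply H; left; auto).
  assert (fold_right (fun x acc => f x + acc) 0 l <= fold_right (fun x acc => g x + acc) 0 l) by (apply IHl; intros; apply H; right; auto). lra. Qed.
Lemma sum_over_abs {A} (l : list A) f :
  Rabs (sum_over l f) <= sum_over l (fun x => Rabs (f x)).
Proof. induction l; simpl. unfold sum_over; simpl; rewrite Rabs_R0; lra.
  unfold sum_over in *; simpl. eapply Rle_trans. apply Rabs_triang. lra. Qed.
Lemma sum_over_const_le {A} (l : list A) f c :
  (forall x, In x l -> f x <= c) -> sum_over l f <= INR (length l) * c.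
Proof. induction l; intros H. unfold sum_over; simpl; lra.
  unfold sum_over in *; simpl fold_right. replace (length (a :: l)) with (S (length l)) by reflexivity. rewrite S_INR.
  assert (f a <= c) by (apply H; left; auto).
  assert (fold_right (fun x acc => f x + acc) 0 l <= INR (length l) * c) by (apply IHl; intros; apply H; right; auto). lra. Qed.

Lemma sum_over_nonneg_zero {A} (l : list A) f :
  (forall x, In x l -> 0 <= f x) -> sum_over l f = 0 -> forall x, In x l -> f x = 0.
Proof. induction l; intros H Hs x Hx. destruct Hx.
  unfold sum_over in *; simpl in Hs.
  assert (0 <= f a) by (apply H; left; auto).
  assert (0 <= fold_right (fun x acc => f x + acc) 0 l) by (apply (sum_over_nonneg l f); intros; apply H; right; auto).
  destruct Hx as [<-|Hx]. lra. apply IHl; auto. intros; apply H; right; auto. lra. Qed.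

Lemma sum_over_zero {A} (l : list A) : sum_over l (fun _ => 0) = 0.
Proof. induction l; unfold sum_over in *; simpl; auto. rewrite IHl; lra. Qed.
Lemma point_mass {A} (l : list A) (w g : A -> R) c :
  (forall x, In x l -> 0 <= w x) -> sum_over l w = 1 -> In c l -> w c = 1 ->
  sum_over l (fun x => w x * g x) = g c.
Proof. intros Hn Hs Hc Hw. destruct (in_split _ _ Hc) as [l1 [l2 ->]].
  rewrite sum_over_app in *. rewrite sum_over_cons in *.
  assert (H0: sum_over (l1 ++ l2) w = 0).
  { rewrite sum_over_app.
    assert (0 <= sum_over l1 w) by (apply sum_over_nonneg; intros; apply Hn; apply in_or_app; auto).
    assert (0 <= sum_over l2 w) by (apply sum_over_nonneg; intros; apply Hn; apply in_or_app; right; right; auto). lra. }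
  assert (Z: forall x, In x (l1 ++ l2) -> w x = 0).
  { apply sum_over_nonneg_zero; auto. intros x Hx; apply Hn. apply in_app_or in Hx; apply in_or_app; destruct Hx; auto. right; right; auto. }
  rewrite (sum_over_ext l1 _ (fun _ => 0)). rewrite (sum_over_ext l2 _ (fun _ => 0)).
  rewrite !sum_over_zero. rewrite Hw; lra.
  intros x Hx; rewrite Z; [lra|apply in_or_app; auto].
  intros x Hx; rewrite Z; [lra|apply in_or_app; auto].
Qed.

Lemma sum_if_eq {A} (l : list A) P f :
  sum_if l P f = sum_over l (fun x => if excluded_middle_informative (P x) then f x else 0).
Proof. reflexivity. Qed.

Lemma prod_over_map {A B} (g : A -> B) l f : prod_over (map g l) f = prod_over l (fun x => f (g x)).
Proof. induction l; simpl; auto. unfold prod_over in *; simpl; rewrite IHl; auto. Qed.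
Lemma prod_over_ext {A} (l : list A) f g :
  (forall x, In x l -> f x = g x) -> prod_over l f = prod_over l g.
Proof. induction l; intros H; simpl; auto. unfold prod_over in *; simpl.
  rewrite H by (left; auto). rewrite IHl; auto. intros; apply H; right; auto. Qed.
Lemma prod_over_nonneg {A} (l : list A) f :
  (forall x, In x l -> 0 <= f x) -> 0 <= prod_over l f.
Proof. induction l; intros H; unfold prod_over in *; simpl. lra.
  apply Rmult_le_pos. apply H; left; auto. apply IHl; intros; apply H; right; auto. Qed.
Lemma prod_over_pos {A} (l : list A) f :
  (forall x, In x l -> 0 < f x) -> 0 < prod_over l f.
Proof. induction l; intros H; unfold prod_over in *; simpl. lra.
  apply Rmult_lt_0_compat. apply H; left; auto. apply IHl; intros; apply H; right; auto. Qed.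
Lemma prod_over_one {A} (l : list A) f :
  (forall x, In x l -> f x = 1) -> prod_over l f = 1.
Proof. induction l; intros H; unfold prod_over in *; simpl. lra.
  rewrite H by (left; auto). rewrite IHl. lra. intros; apply H; right; auto. Qed.


Lemma all_lists_iff d x : In x (all_lists d) <-> length x = d.
Proof.
  revert x; induction d; intros x; cbn [all_lists].
  - split. intros [<-|[]]; auto. destruct x; simpl; intros H; [auto|discriminate].
  - rewrite in_flat_map. split.
    + intros [a [_ Ha]]. apply in_map_iff in Ha. destruct Ha as [y [<- Hy]].
      simpl; f_equal; apply IHd; auto.
    + destruct x as [|a x]; simpl; intros H; [discriminate|]. injection H; intros H'.
      exists a; split. destruct a; simpl; auto. apply in_map; apply IHd; auto.
Qed.

Lemma profiles_of_iff ds a : In a (profiles_of ds) <->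
  length a = length ds /\ forall o, (o < length ds)%nat -> length (nth o a []) = nth o ds 0%nat.
Proof.
  revert a; induction ds as [|d ds IH]; intros a; cbn [profiles_of].
  - split. intros [<-|[]]; split; auto; simpl; intros; lia.
    intros [H _]; destruct a; simpl in *; [auto|discriminate].
  - rewrite in_flat_map. split.
    + intros [x [Hx Ha]]. apply in_map_iff in Ha. destruct Ha as [y [<- Hy]].
      apply IH in Hy. destruct Hy as [H1 H2]. apply all_lists_iff in Hx.
      split. simpl; auto. intros [|o] Ho; simpl; auto. apply H2; simpl in Ho; lia.
    + destruct a as [|x a]; simpl; intros [H1 H2]; [discriminate|].
      exists x; split. apply all_lists_iff. apply (H2 0%nat); lia.
      apply in_map. apply IH. split. lia. intros o Ho. apply (H2 (S o)); lia.
Qed.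

Definition RPok (n : nat) (G : EG) (k : nat) (a : Profile) : Prop :=
  length a = n /\ forall o, (o < n)%nat -> length (nth o a []) = deg n (G k) o.

Lemma RP_iff n G k a : In a (round_profiles n G k) <-> RPok n G k a.
Proof.
  unfold round_profiles, RPok. rewrite profiles_of_iff. rewrite length_map, length_seq.
  split; intros [H1 H2]; split; auto; intros o Ho; rewrite H2 by auto;
  rewrite nth_indep with (d' := deg n (G k) 0%nat) by (rewrite length_map, length_seq; auto);
  rewrite map_nth, seq_nth; auto.
Qed.

Lemma ext_iff n G r : forall k e, In e (ext n G k r) <->
  length e = r /\ forall t, (t < r)%nat -> RPok n G (k + t) (nth t e []).
Proof.
  induction r; intros k e; cbn [ext].
  - split. intros [<-|[]]; split; auto; simpl; intros; lia.
    intros [H _]; destruct e; simpl in *; [auto|discriminate].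
  - rewrite in_flat_map. split.
    + intros [a [Ha He]]. apply in_map_iff in He. destruct He as [e' [<- He']].
      apply IHr in He'. destruct He' as [H1 H2]. apply RP_iff in Ha.
      split. simpl; auto. intros [|t] Ht; simpl. rewrite Nat.add_0_r; auto.
      replace (k + S t)%nat with (S k + t)%nat by lia. apply H2; lia.
    + destruct e as [|a e]; simpl; intros [H1 H2]; [discriminate|].
      exists a; split. apply RP_iff. rewrite <- (Nat.add_0_r k). apply (H2 0%nat); lia.
      apply in_map. apply IHr. split. lia. intros t Ht.
      replace (S k + t)%nat with (k + S t)%nat by lia. apply (H2 (S t)); lia.
Qed.

Lemma hist_iff n G m p : In p (hist n G m) <->
  length p = m /\ forall t, (t < m)%nat -> RPok n G t (nth t p []).
Proof. unfold hist. rewrite ext_iff. reflexivity. Qed.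

Lemma sum_ext_S {A} n G k r (F : Hist -> A -> R) x :
  sum_over (ext n G k (S r)) (fun e => F e x) =
  sum_over (round_profiles n G k) (fun a => sum_over (ext n G (S k) r) (fun e => F (a :: e) x)).
Proof. simpl. rewrite sum_over_flat_map. apply sum_over_ext. intros a _. rewrite sum_over_map. reflexivity. Qed.

Lemma sum_ext_S' n G k r (F : Hist -> R) :
  sum_over (ext n G k (S r)) F =
  sum_over (round_profiles n G k) (fun a => sum_over (ext n G (S k) r) (fun e => F (a :: e))).
Proof. simpl. rewrite sum_over_flat_map. apply sum_over_ext. intros a _. rewrite sum_over_map. reflexivity. Qed.

Lemma prod_seq_S (P : nat -> Action -> R) L x r :
  prod_over (seq 0 (S L)) (fun o => P o (nth o (x :: r) [])) =
  P 0%nat x * prod_over (seq 0 L) (fun o => P (S o) (nth o r [])).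
Proof. cbn [seq]. rewrite <- seq_shift. unfold prod_over at 1. cbn [fold_right]. f_equal.
  change (fold_right (fun x0 acc => P x0 (nth x0 (x :: r) []) * acc) 1 (map S (seq 0 L)))
   with (prod_over (map S (seq 0 L)) (fun o => P o (nth o (x :: r) []))).
  rewrite prod_over_map. reflexivity. Qed.

Lemma profiles_norm ds : forall (P : nat -> Action -> R),
  (forall o, (o < length ds)%nat -> sum_over (all_lists (nth o ds 0%nat)) (P o) = 1) ->
  sum_over (profiles_of ds) (fun a => prod_over (seq 0 (length ds)) (fun o => P o (nth o a []))) = 1.
Proof.
  induction ds as [|d ds IH]; intros P HP.
  - simpl. unfold sum_over, prod_over; simpl. lra.
  - simpl profiles_of. rewrite sum_over_flat_map.
    rewrite (sum_over_ext _ _ (fun x => P 0%nat x * 1)).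
    rewrite sum_over_scal_r. pose proof (HP 0%nat ltac:(simpl; lia)) as H0. simpl nth in H0. rewrite H0. lra.
    intros x _. rewrite sum_over_map. simpl length.
    rewrite (sum_over_ext _ _ (fun r => P 0%nat x * prod_over (seq 0 (length ds)) (fun o => P (S o) (nth o r [])))).
    rewrite sum_over_scal. f_equal. apply (IH (fun o => P (S o))). intros o Ho. apply (HP (S o)). simpl; lia.
    intros r _. apply prod_seq_S.
Qed.

Lemma profiles_nonneg ds (P : nat -> Action -> R) a :
  In a (profiles_of ds) ->
  (forall o x, (o < length ds)%nat -> In x (all_lists (nth o ds 0%nat)) -> 0 <= P o x) ->
  0 <= prod_over (seq 0 (length ds)) (fun o => P o (nth o a [])).
Proof. intros Ha HP. apply prod_over_nonneg. intros o Ho. apply in_seq in Ho.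
  apply HP. lia. apply all_lists_iff. apply profiles_of_iff in Ha. apply Ha. lia. Qed.

Lemma onestep ds : forall (P P' : nat -> Action -> R) (good : nat -> Prop)
  (phi : nat -> Action -> Action) (H H' : Profile -> R),
  (forall o x, (o < length ds)%nat -> good o -> In x (all_lists (nth o ds 0%nat)) -> P' o x = P o (phi o x)) ->
  (forall o x, (o < length ds)%nat -> good o -> In x (all_lists (nth o ds 0%nat)) ->
     In (phi o x) (all_lists (nth o ds 0%nat)) /\ phi o (phi o x) = x) ->
  (forall o f, (o < length ds)%nat -> good o ->
     sum_over (all_lists (nth o ds 0%nat)) (fun x => f (phi o x)) = sum_over (all_lists (nth o ds 0%nat)) f) ->
  (forall o, (o < length ds)%nat -> ~ good o ->
     sum_over (all_lists (nth o ds 0%nat)) (P o) = 1 /\ sum_over (all_lists (nth o ds 0%nat)) (P' o) = 1) ->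
  (forall a a', In a (profiles_of ds) -> In a' (profiles_of ds) ->
     (forall o, (o < length ds)%nat -> good o -> nth o a [] = phi o (nth o a' [])) -> H a = H' a') ->
  sum_over (profiles_of ds) (fun a => prod_over (seq 0 (length ds)) (fun o => P o (nth o a [])) * H a) =
  sum_over (profiles_of ds) (fun a => prod_over (seq 0 (length ds)) (fun o => P' o (nth o a [])) * H' a).
Proof.
  induction ds as [|d ds IH]; intros P P' good phi H H' HP Hphi Hsum Hbad HH.
  - simpl. unfold sum_over, prod_over; simpl. rewrite (HH [] []); simpl; auto.
    intros; lia.
  - simpl profiles_of. rewrite !sum_over_flat_map. simpl length.
    set (S0 := fun x => sum_over (profiles_of ds) (fun r =>
             prod_over (seq 0 (length ds)) (fun o => P (S o) (nth o r [])) * H (x :: r))).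
    set (S1 := fun y => sum_over (profiles_of ds) (fun r =>
             prod_over (seq 0 (length ds)) (fun o => P' (S o) (nth o r [])) * H' (y :: r))).
    assert (EL: forall x, sum_over (map (cons x) (profiles_of ds))
       (fun a => prod_over (seq 0 (S (length ds))) (fun o => P o (nth o a [])) * H a) = P 0%nat x * S0 x).
    { intros x. rewrite sum_over_map. unfold S0. rewrite <- sum_over_scal. apply sum_over_ext.
      intros r _. rewrite prod_seq_S. apply Rmult_assoc. }
    assert (ER: forall x, sum_over (map (cons x) (profiles_of ds))
       (fun a => prod_over (seq 0 (S (length ds))) (fun o => P' o (nth o a [])) * H' a) = P' 0%nat x * S1 x).
    { intros x. rewrite sum_over_map. unfold S1. rewrite <- sum_over_scal. apply sum_over_ext.
      intros r _. rewrite prod_seq_S. apply Rmult_assoc. }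
    rewrite (sum_over_ext _ _ _ (fun x _ => EL x)).
    rewrite (sum_over_ext _ _ _ (fun x _ => ER x)).
    assert (IHx: forall x y, In x (all_lists d) -> In y (all_lists d) ->
       (good 0%nat -> x = phi 0%nat y) -> S0 x = S1 y).
    { intros x y Hx Hy Hxy. unfold S0, S1.
      apply (IH (fun o => P (S o)) (fun o => P' (S o)) (fun o => good (S o)) (fun o => phi (S o))).
      - intros o z Ho Hg Hz. apply (HP (S o)); simpl; auto; lia.
      - intros o z Ho Hg Hz. apply (Hphi (S o)); simpl; auto; lia.
      - intros o f Ho Hg. apply (Hsum (S o)); simpl; auto; lia.
      - intros o Ho Hg. apply (Hbad (S o)); simpl; auto; lia.
      - intros a a' Ha Ha' Hg. apply HH.
        + apply profiles_of_iff in Ha. apply profiles_of_iff. simpl. split. lia.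
          intros [|o] Ho. simpl. apply all_lists_iff; auto. apply Ha. lia.
        + apply profiles_of_iff in Ha'. apply profiles_of_iff. simpl. split. lia.
          intros [|o] Ho. simpl. apply all_lists_iff; auto. apply Ha'. lia.
        + intros [|o] Ho Hgo; simpl. auto. apply Hg; auto. simpl in Ho; lia. }
    destruct (classic (good 0%nat)) as [G0|G0].
    +
      pose proof (Hsum 0%nat (fun y => P' 0%nat y * S1 y) ltac:(simpl; lia) G0) as HS. simpl nth in HS. rewrite <- HS.
      apply sum_over_ext. intros x Hx. simpl nth in *.
      destruct (Hphi 0%nat x ltac:(simpl; lia) G0 Hx) as [Hpx Hpp].
      rewrite (HP 0%nat (phi 0%nat x)) by (simpl; auto; lia). simpl nth. rewrite Hpp.
      f_equal. apply IHx; auto.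
    + destruct (Hbad 0%nat ltac:(simpl; lia) G0) as [B1 B2]. simpl nth in B1, B2.
      set (y0 := repeat Defect d).
      assert (Hy0: In y0 (all_lists d)) by (apply all_lists_iff; unfold y0; apply repeat_length).
      rewrite (sum_over_ext _ (fun x => P 0%nat x * S0 x) (fun x => P 0%nat x * S1 y0)).
      rewrite (sum_over_ext _ (fun x => P' 0%nat x * S1 x) (fun x => P' 0%nat x * S0 y0)).
      rewrite !sum_over_scal_r. rewrite B1, B2. rewrite (IHx y0 y0); auto. intros; contradiction.
      intros x Hx. f_equal. symmetry. apply IHx; auto. intros; contradiction.
      intros x Hx. f_equal. apply IHx; auto. intros; contradiction.
Qed.


Fixpoint modAt {A} (k : nat) (f : A -> A) (l : list A) : list A :=
  match k, l with
  | O, x :: r => f x :: r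
  | S k, x :: r => x :: modAt k f r
  | _, [] => []
  end.

Lemma length_modAt {A} k (f : A -> A) l : length (modAt k f l) = length l.
Proof. revert l; induction k; destruct l; simpl; auto. Qed.
Lemma nth_modAt_same {A} k (f : A -> A) l d : (k < length l)%nat -> nth k (modAt k f l) d = f (nth k l d).
Proof. revert l; induction k; destruct l; simpl; intros; try lia; auto. apply IHk. lia. Qed.
Lemma nth_modAt_other {A} k k' (f : A -> A) l d : k' <> k -> nth k' (modAt k f l) d = nth k' l d.
Proof. revert l k'; induction k; destruct l; destruct k'; simpl; intros; auto; try lia. Qed.
Lemma modAt_invol {A} k (f : A -> A) l : (forall x, f (f x) = x) -> modAt k f (modAt k f l) = l.
Proof. revert l; induction k; destruct l; simpl; intros; auto. rewrite H; auto. rewrite IHk; auto. Qed.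

Definition swapI (x : IAct) : IAct :=
  match x with Defect => Coop | Coop => Defect | Punish => Punish end.
Lemma swapI_invol x : swapI (swapI x) = x. Proof. destruct x; auto. Qed.

Lemma sum_swap d : forall k (f : Action -> R),
  sum_over (all_lists d) (fun x => f (modAt k swapI x)) = sum_over (all_lists d) f.
Proof.
  induction d; intros k f.
  - cbn [all_lists]. destruct k; reflexivity.
  - cbn [all_lists]. rewrite !sum_over_flat_map. destruct k.
    + cbn [sum_over fold_right]. rewrite !sum_over_map. cbn [modAt swapI].
      unfold sum_over; simpl. lra.
    + apply sum_over_ext. intros y _. rewrite !sum_over_map. cbn [modAt].
      apply (IHd k (fun r => f (y :: r))).
Qed.

Lemma index_of_inj (L : list nat) l j : In j L -> index_of l L = index_of j L -> l = j.
Proof.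
  induction L as [|x L IH]; simpl; intros Hj H. destruct Hj.
  destruct (Nat.eqb x l) eqn:E1; destruct (Nat.eqb x j) eqn:E2;
    apply Nat.eqb_eq in E1 || apply Nat.eqb_neq in E1; apply Nat.eqb_eq in E2 || apply Nat.eqb_neq in E2;
    try congruence.
  apply IH. destruct Hj; [congruence|auto]. congruence.
Qed.
Lemma index_of_lt (L : list nat) j : In j L -> (index_of j L < length L)%nat.
Proof. induction L as [|x L IH]; simpl; intros Hj. destruct Hj.
  destruct (Nat.eqb x j) eqn:E. lia. apply Nat.eqb_neq in E. destruct Hj; [congruence|]. specialize (IH H); lia. Qed.

Lemma in_nbrs n g i l : In l (nbrs n g i) <-> (l < n)%nat /\ g i l = true.
Proof. unfold nbrs. rewrite filter_In, in_seq. split; intros [A B]; split; auto; lia. Qed.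

Lemma nbrs_length n g i : (length (nbrs n g i) <= n)%nat.
Proof. unfold nbrs. rewrite <- (length_seq n 0) at 2. apply filter_length_le. Qed.

Lemma nbrs_ext n g g' i : (forall x, g i x = g' i x) -> nbrs n g i = nbrs n g' i.
Proof. intros H. unfold nbrs. apply filter_ext. auto. Qed.

Definition swapA (n i j : nat) (g : Graph) (x : Action) : Action :=
  if g i j then modAt (index_of j (nbrs n g i)) swapI x else x.

Lemma swapA_length n i j g x : length (swapA n i j g x) = length x.
Proof. unfold swapA. destruct (g i j); auto. apply length_modAt. Qed.
Lemma swapA_invol n i j g x : swapA n i j g (swapA n i j g x) = x.
Proof. unfold swapA. destruct (g i j); auto. apply modAt_invol. apply swapI_invol. Qed.
Lemma swapA_sum n i j g d f :
  sum_over (all_lists d) (fun x => f (swapA n i j g x)) = sum_over (all_lists d) f.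
Proof. unfold swapA. destruct (g i j); auto. apply sum_swap. Qed.
Lemma swapA_in n i j g d x : In x (all_lists d) -> In (swapA n i j g x) (all_lists d).
Proof. rewrite !all_lists_iff. rewrite swapA_length. auto. Qed.
Lemma swapA_ext n i j g g' x : (forall y, g i y = g' i y) -> swapA n i j g x = swapA n i j g' x.
Proof. intros H. unfold swapA. rewrite (nbrs_ext n g g' i H), H. auto. Qed.

Lemma act_swapA_other n i j g l x : (j < n)%nat -> l <> j ->
  act_toward n g i l (swapA n i j g x) = act_toward n g i l x.
Proof. intros Hj Hl. unfold act_toward, swapA. destruct (g i j) eqn:E; auto.
  apply nth_modAt_other. intros Heq. apply Hl. apply index_of_inj with (nbrs n g i); auto.
  apply in_nbrs; auto. Qed.

Lemma act_swapA_j n i j g x : (j < n)%nat -> g i j = true -> length x = deg n g i ->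
  act_toward n g i j (swapA n i j g x) = swapI (act_toward n g i j x).
Proof. intros Hj E Hx. unfold act_toward, swapA. rewrite E. apply nth_modAt_same.
  rewrite Hx. unfold deg. apply index_of_lt. apply in_nbrs; auto. Qed.

Definition swapH (n i j m : nat) (G : EG) (p : Hist) : Hist :=
  modAt m (modAt i (swapA n i j (G m))) p.

Definition devS (n i j m : nat) (sigma : Protocol) : Strategy := fun G p a =>
  if Nat.ltb (length p) m then sigma i G p a
  else if Nat.eqb (length p) m then sigma i G p (swapA n i j (G m) a)
  else sigma i G (swapH n i j m G p) a.

Lemma swapH_length n i j m G p : length (swapH n i j m G p) = length p.
Proof. apply length_modAt. Qed.

Lemma nth_swapH n i j m G p k o : nth o (nth k (swapH n i j m G p) []) [] =
  if (Nat.eqb k m && Nat.eqb o i && Nat.ltb k (length p) && Nat.ltb o (length (nth k p [])))%bool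
  then swapA n i j (G m) (nth o (nth k p []) []) else nth o (nth k p []) [].
Proof.
  unfold swapH. destruct (Nat.eqb k m) eqn:E1; simpl.
  - apply Nat.eqb_eq in E1; subst k. destruct (Nat.ltb m (length p)) eqn:E3.
    + apply Nat.ltb_lt in E3. rewrite nth_modAt_same by auto.
      destruct (Nat.eqb o i) eqn:E2; simpl.
      * apply Nat.eqb_eq in E2; subst o. destruct (Nat.ltb i (length (nth m p []))) eqn:E4.
        apply Nat.ltb_lt in E4. apply nth_modAt_same; auto.
        apply Nat.ltb_ge in E4. rewrite !nth_overflow; auto. rewrite length_modAt; auto.
      * apply Nat.eqb_neq in E2. apply nth_modAt_other; auto.
    + apply Nat.ltb_ge in E3. rewrite andb_false_r. simpl. rewrite (nth_overflow p) by auto.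
      rewrite (nth_overflow (modAt _ _ p)); auto. rewrite length_modAt; auto.
  - apply Nat.eqb_neq in E1. rewrite nth_modAt_other; auto.
Qed.

Lemma RPok_len n G k a o : RPok n G k a -> (o < n)%nat -> length (nth o a []) = deg n (G k) o.
Proof. intros [_ H] Ho; auto. Qed.

Lemma swapH_hist n i j m G p : In p (hist n G (length p)) -> In (swapH n i j m G p) (hist n G (length p)).
Proof.
  rewrite !hist_iff. intros [_ H]. split. apply swapH_length. intros t Ht.
  destruct (H t Ht) as [H1 H2]. split.
  - unfold swapH. destruct (Nat.eq_dec t m). subst. rewrite nth_modAt_same by auto. rewrite length_modAt; auto.
    rewrite nth_modAt_other; auto.
  - intros o Ho. rewrite nth_swapH. destruct (_ && _)%bool eqn:E; auto.
    repeat (apply andb_prop in E; destruct E as [E ?]). apply Nat.eqb_eq in E; subst.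
    rewrite swapA_length; auto.
Qed.


Lemma nth_swapH_ne n i j m G (p : Hist) k o : o <> i ->
  nth o (nth k (swapH n i j m G p) []) [] = nth o (nth k p []) [].
Proof. intros H. rewrite nth_swapH. apply Nat.eqb_neq in H. rewrite H. rewrite !andb_false_r. simpl.
  destruct (Nat.eqb k m); reflexivity. Qed.
Lemma nth_swapH_nm n i j m G (p : Hist) k o : k <> m ->
  nth o (nth k (swapH n i j m G p) []) [] = nth o (nth k p []) [].
Proof. intros H. rewrite nth_swapH. apply Nat.eqb_neq in H. rewrite H. reflexivity. Qed.
Lemma nth_swapH_im n i j m G (p : Hist) : (m < length p)%nat -> (i < length (nth m p []))%nat ->
  nth i (nth m (swapH n i j m G p) []) [] = swapA n i j (G m) (nth i (nth m p []) []).
Proof. intros H1 H2. rewrite nth_swapH. rewrite Nat.eqb_refl, Nat.eqb_refl.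
  simpl. destruct (Nat.ltb_spec m (length p)); destruct (Nat.ltb_spec i (length (nth m p []))); simpl; auto; lia. Qed.

Lemma know_graph (Gs : EG -> Prop) (K : Knowledge) G G' i k :
  knowledge_wf Gs K -> Gs G -> Gs G' -> (K G i k (G k) <-> K G' i k (G k)) ->
  forall x, G k i x = G' k i x.
Proof. intros HK HG HG' Heq x. destruct (HK G HG i k) as [H1 _]. destruct (HK G' HG' i k) as [_ H2].
  apply (H2 (G k)). apply Heq; auto. Qed.

Lemma dev_valid n (Gs : EG -> Prop) K sigma i j m :
  (forall G, Gs G -> forall m, wf_graph n (G m)) -> knowledge_wf Gs K -> (i < n)%nat ->
  valid_strategy n Gs K i (sigma i) -> valid_strategy n Gs K i (devS n i j m sigma).
Proof.
  intros HGs HK Hi [V1 V2]. split.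
  - intros G p HG Hp. unfold devS.
    destruct (Nat.ltb (length p) m) eqn:E1; [apply V1; auto|].
    destruct (Nat.eqb (length p) m) eqn:E2.
    + destruct (V1 G p HG Hp) as [A B]. split.
      * intros a Ha. apply A. apply swapA_in; auto.
      * rewrite (swapA_sum n i j (G m) _ (sigma i G p)). auto.
    + pose proof (swapH_hist n i j m G p Hp) as Hs.
      rewrite <- (swapH_length n i j m G p) in Hs.
      destruct (V1 G _ HG Hs) as [A B]. rewrite swapH_length in A, B. auto.
  - intros G p G' p' HG HG' Hp Hp' Hobs a. unfold devS.
    destruct Hobs as [HL [HKn Hact]].
    rewrite <- HL.
    assert (Hobs: obs_equiv n K i G p G' p') by (split; auto).
    destruct (Nat.ltb (length p) m) eqn:E1; [apply V2; auto|].
    apply Nat.ltb_ge in E1.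
    assert (Hg: forall x, G m i x = G' m i x).
    { apply (know_graph Gs K); auto. }
    destruct (Nat.eqb (length p) m) eqn:E2.
    + rewrite (swapA_ext n i j (G m) (G' m)) by auto. apply V2; auto.
    + apply Nat.eqb_neq in E2.
      assert (Hlen: forall q (GG : EG), In q (hist n GG (length q)) -> forall k, (k < length q)%nat -> (i < length (nth k q []))%nat).
      { intros q GG Hq k Hk. apply hist_iff in Hq. destruct Hq as [_ Hq]. destruct (Hq k Hk) as [Hq1 _]. lia. }
      apply V2; auto.
      * pose proof (swapH_hist n i j m G p Hp) as Hs. rewrite swapH_length. auto.
      * pose proof (swapH_hist n i j m G' p' Hp') as Hs. rewrite swapH_length. auto.
      * split; [rewrite !swapH_length; auto|]. split.
        { rewrite swapH_length. auto. }
        intros k Hk. rewrite swapH_length in Hk. split.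
        { destruct (Nat.eq_dec k m).
          - subst. rewrite !nth_swapH_im; try lia; try (eapply Hlen; eauto; lia).
            rewrite (proj1 (Hact m Hk)). apply swapA_ext; auto.
          - rewrite !nth_swapH_nm by auto. apply Hact; auto. }
        intros l Hl. assert (l <> i).
        { intros ->. destruct (HGs G HG k) as [_ [Hirr _]]. rewrite Hirr in Hl; discriminate. }
        rewrite !nth_swapH_ne by auto. apply Hact; auto.
Qed.


Lemma hist_snoc n G (q : Hist) a : In q (hist n G (length q)) -> In a (round_profiles n G (length q)) ->
  In (q ++ [a]) (hist n G (length (q ++ [a]))).
Proof.
  rewrite !hist_iff, RP_iff. intros [_ Hq] Ha. rewrite length_app. simpl. split; auto.
  intros t Ht. destruct (Nat.lt_ge_cases t (length q)).
  - rewrite app_nth1 by auto. auto.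
  - assert (t = length q) by lia. subst. rewrite app_nth2 by lia. rewrite Nat.sub_diag. simpl. auto.
Qed.

Lemma nth_snoc_lt {A} (q : list A) a t d : (t < length q)%nat -> nth t (q ++ [a]) d = nth t q d.
Proof. intros; apply app_nth1; auto. Qed.
Lemma nth_snoc_eq {A} (q : list A) a d : nth (length q) (q ++ [a]) d = a.
Proof. rewrite app_nth2 by lia. rewrite Nat.sub_diag. reflexivity. Qed.

Lemma onestep_RP n G k : forall (P P' : nat -> Action -> R) (good : nat -> Prop)
  (phi : nat -> Action -> Action) (H H' : Profile -> R),
  (forall o x, (o < n)%nat -> good o -> In x (all_lists (deg n (G k) o)) -> P' o x = P o (phi o x)) ->
  (forall o x, (o < n)%nat -> good o -> In x (all_lists (deg n (G k) o)) ->
     In (phi o x) (all_lists (deg n (G k) o)) /\ phi o (phi o x) = x) ->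
  (forall o f, (o < n)%nat -> good o ->
     sum_over (all_lists (deg n (G k) o)) (fun x => f (phi o x)) = sum_over (all_lists (deg n (G k) o)) f) ->
  (forall o, (o < n)%nat -> ~ good o ->
     sum_over (all_lists (deg n (G k) o)) (P o) = 1 /\ sum_over (all_lists (deg n (G k) o)) (P' o) = 1) ->
  (forall a a', In a (round_profiles n G k) -> In a' (round_profiles n G k) ->
     (forall o, (o < n)%nat -> good o -> nth o a [] = phi o (nth o a' [])) -> H a = H' a') ->
  sum_over (round_profiles n G k) (fun a => prod_over (seq 0 n) (fun o => P o (nth o a [])) * H a) =
  sum_over (round_profiles n G k) (fun a => prod_over (seq 0 n) (fun o => P' o (nth o a [])) * H' a).
Proof.
  intros P P' good phi H H' H1 H2 H3 H4 H5. unfold round_profiles.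
  set (ds := map (fun i => deg n (G k) i) (seq 0 n)).
  assert (Ln: length ds = n) by (unfold ds; rewrite length_map, length_seq; auto).
  assert (Nd: forall o, (o < n)%nat -> nth o ds 0%nat = deg n (G k) o).
  { intros o Ho. unfold ds. rewrite nth_indep with (d' := deg n (G k) 0%nat) by (rewrite length_map, length_seq; auto).
    rewrite map_nth, seq_nth; auto. }
  rewrite <- Ln. apply (onestep ds P P' good phi H H'); rewrite ?Ln.
  - intros o x Ho Hg Hx. rewrite Nd in Hx by auto. auto.
  - intros o x Ho Hg Hx. rewrite Nd in * by auto. auto.
  - intros o f Ho Hg. rewrite Nd by auto. auto.
  - intros o Ho Hg. rewrite Nd by auto. auto.
  - intros a a' Ha Ha' Hg. apply H5; auto.
Qed.

Lemma norm_RP n G k (P : nat -> Action -> R) :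
  (forall o, (o < n)%nat -> sum_over (all_lists (deg n (G k) o)) (P o) = 1) ->
  sum_over (round_profiles n G k) (fun a => prod_over (seq 0 n) (fun o => P o (nth o a []))) = 1.
Proof.
  intros HP. unfold round_profiles.
  set (ds := map (fun i => deg n (G k) i) (seq 0 n)).
  assert (Ln: length ds = n) by (unfold ds; rewrite length_map, length_seq; auto).
  assert (Nd: forall o, (o < n)%nat -> nth o ds 0%nat = deg n (G k) o).
  { intros o Ho. unfold ds. rewrite nth_indep with (d' := deg n (G k) 0%nat) by (rewrite length_map, length_seq; auto).
    rewrite map_nth, seq_nth; auto. }
  rewrite <- Ln. apply profiles_norm. intros o Ho. rewrite Ln in Ho. rewrite Nd; auto.
Qed.

Definition valid_prot (n : nat) (Gs : EG -> Prop) (K : Knowledge) (tau : Protocol) : Prop :=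
  forall o, (o < n)%nat -> valid_strategy n Gs K o (tau o).

Lemma prob_nonneg_RP n Gs K tau G (q : Hist) a : valid_prot n Gs K tau -> Gs G ->
  In q (hist n G (length q)) -> In a (round_profiles n G (length q)) ->
  0 <= prod_over (seq 0 n) (fun o => tau o G q (nth o a [])).
Proof. intros Hv HG Hq Ha. apply prod_over_nonneg. intros o Ho. apply in_seq in Ho.
  destruct (Hv o ltac:(lia)) as [V1 _]. apply (proj1 (V1 G q HG Hq)).
  apply all_lists_iff. apply RP_iff in Ha. apply Ha. lia. Qed.

Lemma ext_norm n Gs K tau G : valid_prot n Gs K tau -> Gs G -> forall r (q : Hist),
  In q (hist n G (length q)) ->
  sum_over (ext n G (length q) r) (prob_ext n tau G q) = 1 /\
  forall e, In e (ext n G (length q) r) -> 0 <= prob_ext n tau G q e.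
Proof.
  intros Hv HG. induction r; intros q Hq.
  - simpl. split. unfold sum_over; simpl; lra. intros e [<-|[]]. simpl; lra.
  - split.
    + rewrite sum_ext_S'. cbn [prob_ext].
      rewrite (sum_over_ext _ _ (fun a => prod_over (seq 0 n) (fun o => tau o G q (nth o a [])) * 1)).
      * rewrite sum_over_scal_r. match goal with |- ?X * 1 = 1 => assert (HX: X = 1) end.
        { apply (norm_RP n G (length q) (fun o => tau o G q)). intros o Ho.
          destruct (Hv o Ho) as [V1 _]. apply (proj2 (V1 G q HG Hq)). }
        rewrite HX; lra.
      * intros a Ha. rewrite sum_over_scal. f_equal.
        pose proof (hist_snoc n G q a Hq Ha) as Hs. destruct (IHr _ Hs) as [A _].
        rewrite length_app in A. simpl in A. rewrite Nat.add_1_r in A. exact A.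
    + intros e He. cbn [ext] in He. apply in_flat_map in He. destruct He as [a [Ha He]].
      apply in_map_iff in He. destruct He as [e' [<- He']]. cbn [prob_ext].
      apply Rmult_le_pos. eapply prob_nonneg_RP; eauto.
      pose proof (hist_snoc n G q a Hq Ha) as Hs. destruct (IHr _ Hs) as [_ B]. apply B.
      rewrite length_app. simpl. rewrite Nat.add_1_r. auto.
Qed.


Lemma chain_mono G i steps : forall o lo l m1 m2, chain_avoid G i o lo steps l m1 -> (m1 <= m2)%nat ->
  chain_avoid G i o lo steps l m2.
Proof. induction steps as [|[o' mt] rest IH]; simpl; intros; auto.
  destruct H as [A [B [C [D E]]]]. repeat split; auto. lia. eapply IH; eauto. Qed.

Lemma chain_snoc G i steps : forall o lo l m1 o' m2, chain_avoid G i o lo steps l m1 ->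
  (lo <= m1)%nat -> l <> i -> G m1 l o' = true -> (m1 < m2)%nat ->
  chain_avoid G i o lo (steps ++ [(o', m1)]) o' m2.
Proof. induction steps as [|[o1 mt] rest IH]; simpl; intros o lo l m1 o' m2 H Hlo Hl He Hm.
  - subst. repeat split; auto.
  - destruct H as [A [B [C [D E]]]]. repeat split; auto. lia. eapply IH; eauto. Qed.

Lemma infl_mono G i j m o k k' : influences_avoiding G i j m o k -> (k <= k')%nat ->
  influences_avoiding G i j m o k'.
Proof. intros [H1 [st H2]] Hk. split. lia. exists st. eapply chain_mono; eauto. Qed.

Lemma infl_step G i j m q o k' k : influences_avoiding G i j m q k' -> q <> i -> G k' q o = true ->
  (k' < k)%nat -> influences_avoiding G i j m o k.
Proof. intros [H1 [st H2]] Hq He Hk. split. lia. exists (st ++ [(o, k')]). eapply chain_snoc; eauto. lia. Qed.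

Lemma infl_j G i j m k : (m < k)%nat -> influences_avoiding G i j m j k.
Proof. intros. split; auto. exists []. simpl; auto. Qed.

Lemma infl_gt G i j m o k : influences_avoiding G i j m o k -> (m < k)%nat.
Proof. intros [H _]; auto. Qed.


Definition good (G : EG) (i j m k o : nat) : Prop := o = i \/ ~ influences_avoiding G i j m o k.
Definition phi (n : nat) (G : EG) (i j m k o : nat) (x : Action) : Action :=
  if (Nat.eqb k m && Nat.eqb o i)%bool then swapA n i j (G m) x else x.
Definition Rel (n : nat) (G : EG) (i j m : nat) (q q' : Hist) : Prop :=
  length q = length q' /\ forall k o, (k < length q)%nat -> (o < n)%nat -> good G i j m k o ->
    nth o (nth k q []) [] = phi n G i j m k o (nth o (nth k q' []) []).

Lemma obs_same n K o G (p p' : Hist) : length p = length p' ->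
  (forall k, (k < length p)%nat -> nth o (nth k p []) [] = nth o (nth k p' []) [] /\
     forall l, G k o l = true -> act_toward n (G k) l o (nth l (nth k p []) []) =
                                 act_toward n (G k) l o (nth l (nth k p' []) [])) ->
  obs_equiv n K o G p G p'.
Proof. intros H1 H2. split; auto. split; auto. intros; tauto. Qed.

Lemma phi_id n G i j m k o x : (k <> m \/ o <> i) -> phi n G i j m k o x = x.
Proof. intros H. unfold phi. destruct H as [H|H]; apply Nat.eqb_neq in H; rewrite H;
  [|rewrite andb_false_r]; reflexivity. Qed.


Lemma strat_eq n Gs K sigma i j m rho G (q q' : Hist) o x :
  (forall G, Gs G -> forall m, wf_graph n (G m)) -> Gs G -> valid_prot n Gs K sigma ->
  (i < n)%nat -> (j < n)%nat ->
  (forall l m', punishment_opportunity G i j m l m' -> (m + rho <= m')%nat) ->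
  In q (hist n G (length q)) -> In q' (hist n G (length q')) -> Rel n G i j m q q' ->
  (length q < m + rho)%nat -> (o < n)%nat -> good G i j m (length q) o ->
  deviate sigma i (devS n i j m sigma) o G q' x = sigma o G q (phi n G i j m (length q) o x).
Proof.
  intros HGs HG Hv Hi Hj HPO Hq Hq' [HL HR] Hk Ho Hg.
  assert (Hsym: forall k a b, G k a b = G k b a) by (intros k a b; apply (HGs G HG k)).
  assert (Hirr: forall k a, G k a a = false) by (intros k a; apply (HGs G HG k)).
  unfold deviate. destruct (Nat.eqb o i) eqn:Eo.
  - apply Nat.eqb_eq in Eo; subst o. unfold devS. rewrite <- HL.
    destruct (Nat.ltb_spec (length q) m).
    + rewrite phi_id by lia. destruct (Hv i Hi) as [_ V2]. apply V2; auto.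
      apply obs_same. lia. intros k Hk'. rewrite <- HL in Hk'. split.
      * rewrite (HR k i) by (auto; left; auto). rewrite phi_id by lia. auto.
      * intros l Hl. assert (l <> i) by (intros ->; rewrite Hirr in Hl; discriminate).
        assert (Hlt: (l < n)%nat) by (apply (HGs G HG k) in Hl; lia).
        rewrite (HR k l) by (lia || (right; intros Hin; apply infl_gt in Hin; lia)).
        rewrite phi_id by auto. auto.
    + destruct (Nat.eqb_spec (length q) m).
      * unfold phi. rewrite e, !Nat.eqb_refl. simpl. destruct (Hv i Hi) as [_ V2]. apply V2; auto.
        apply obs_same. lia. intros k Hk'. rewrite <- HL in Hk'. split.
        -- rewrite (HR k i) by (auto; left; auto). rewrite phi_id by lia. auto.
        -- intros l Hl. assert (l <> i) by (intros ->; rewrite Hirr in Hl; discriminate).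
           assert (Hlt: (l < n)%nat) by (apply (HGs G HG k) in Hl; lia).
           rewrite (HR k l) by (lia || (right; intros Hin; apply infl_gt in Hin; lia)).
           rewrite phi_id by auto. auto.
      * rewrite phi_id by lia. destruct (Hv i Hi) as [_ V2]. apply V2; auto.
        { pose proof (swapH_hist n i j m G q' Hq') as Hs. rewrite swapH_length. auto. }
        apply obs_same. rewrite swapH_length; lia. intros k Hk'. rewrite swapH_length in Hk'. split.
        -- rewrite (HR k i) by (lia || (left; auto)).
           destruct (Nat.eq_dec k m).
           ++ subst k. rewrite nth_swapH_im; auto.
              unfold phi. rewrite !Nat.eqb_refl. reflexivity.
              apply hist_iff in Hq'. destruct Hq' as [_ Hq']. destruct (Hq' m Hk') as [A _]. lia.
           ++ rewrite nth_swapH_nm by auto. rewrite phi_id by auto. auto.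
        -- intros l Hl. assert (l <> i) by (intros ->; rewrite Hirr in Hl; discriminate).
           assert (Hlt: (l < n)%nat) by (apply (HGs G HG k) in Hl; lia).
           rewrite nth_swapH_ne by auto.
           assert (Hgl: good G i j m k l).
           { right. intros Hin. assert (m + rho <= k)%nat; [|lia]. apply (HPO l k). split; auto. }
           rewrite (HR k l) by (lia || auto). rewrite phi_id by auto. auto.
  - apply Nat.eqb_neq in Eo. rewrite phi_id by auto.
    destruct Hg as [Hg|Hg]; [congruence|].
    destruct (Hv o Ho) as [_ V2]. apply V2; auto.
    apply obs_same. lia. intros k Hk'. rewrite <- HL in Hk'.
    assert (Hgk: good G i j m k o).
    { right. intros Hin. apply Hg. eapply infl_mono; eauto. lia. }
    split.
    + rewrite (HR k o) by auto. rewrite phi_id by auto. auto.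
    + intros l Hl. assert (Hlt: (l < n)%nat) by (apply (HGs G HG k) in Hl; lia).
      destruct (Nat.eq_dec l i).
      * subst l. rewrite (HR k i) by (auto; left; auto).
        destruct (Nat.eq_dec k m).
        -- subst k. unfold phi. rewrite !Nat.eqb_refl. simpl.
           assert (o <> j).
           { intros ->. apply Hg. apply infl_j. lia. }
           rewrite act_swapA_other; auto.
        -- rewrite phi_id by auto. auto.
      * assert (Hgl: good G i j m k l).
        { right. intros Hin. apply Hg. eapply infl_step; eauto. }
        rewrite (HR k l) by auto. rewrite phi_id by auto. auto.
Qed.


Lemma couple n Gs K sigma i j m rho G :
  (forall G, Gs G -> forall m, wf_graph n (G m)) -> Gs G -> valid_prot n Gs K sigma ->
  knowledge_wf Gs K ->
  (i < n)%nat -> (j < n)%nat ->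
  (forall l m', punishment_opportunity G i j m l m' -> (m + rho <= m')%nat) ->
  forall r (q q' : Hist) (F F' : Hist -> R),
  In q (hist n G (length q)) -> In q' (hist n G (length q')) -> Rel n G i j m q q' ->
  (length q + r <= m + rho)%nat ->
  (forall e e', In e (ext n G (length q) r) -> In e' (ext n G (length q) r) ->
     Rel n G i j m (q ++ e) (q' ++ e') -> F e = F' e') ->
  sum_over (ext n G (length q) r) (fun e => prob_ext n sigma G q e * F e) =
  sum_over (ext n G (length q) r) (fun e => prob_ext n (deviate sigma i (devS n i j m sigma)) G q' e * F' e).
Proof.
  intros HGs HG Hv HK Hi Hj HPO.
  induction r; intros q q' F F' Hq Hq' HR Hr HF.
  - simpl. unfold sum_over; simpl. rewrite (HF [] []); simpl; auto. rewrite !app_nil_r; auto.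
  - rewrite !sum_ext_S'. cbn [prob_ext].
    set (k := length q).
    set (dev := deviate sigma i (devS n i j m sigma)).
    assert (HL: length q' = k) by (destruct HR; unfold k; lia).
    set (H := fun a => sum_over (ext n G (S k) r) (fun e => prob_ext n sigma G (q ++ [a]) e * F (a :: e))).
    set (H' := fun a => sum_over (ext n G (S k) r) (fun e => prob_ext n dev G (q' ++ [a]) e * F' (a :: e))).
    rewrite (sum_over_ext _ _ (fun a => prod_over (seq 0 n) (fun o => sigma o G q (nth o a [])) * H a)).
    2:{ intros a _. unfold H. rewrite <- sum_over_scal. apply sum_over_ext. intros e _. apply Rmult_assoc. }
    rewrite (sum_over_ext _ (fun a => sum_over (ext n G (S k) r) (fun e => prod_over (seq 0 n) (fun o => dev o G q' (nth o a [])) * prob_ext n dev G (q' ++ [a]) e * F' (a :: e)))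
       (fun a => prod_over (seq 0 n) (fun o => dev o G q' (nth o a [])) * H' a)).
    2:{ intros a _. unfold H'. rewrite <- sum_over_scal. apply sum_over_ext. intros e _. apply Rmult_assoc. }
    apply (onestep_RP n G k (fun o => sigma o G q) (fun o => dev o G q') (good G i j m k) (phi n G i j m k)).
    + intros o x Ho Hg Hx. unfold dev. apply (strat_eq n Gs K sigma i j m rho G); auto. lia.
    + intros o x Ho Hg Hx. unfold phi. destruct (_ && _)%bool eqn:E; auto.
      apply andb_prop in E. destruct E as [E1 E2]. apply Nat.eqb_eq in E1, E2. subst.
      split. apply swapA_in; auto. apply swapA_invol.
    + intros o f Ho Hg. unfold phi. destruct (_ && _)%bool; auto. apply swapA_sum.
    + intros o Ho Hg. assert (o <> i) by (intros ->; apply Hg; left; auto).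
      unfold dev, deviate. apply Nat.eqb_neq in H0. rewrite H0.
      destruct (Hv o Ho) as [V1 _]. split.
      * apply (proj2 (V1 G q HG Hq)).
      * rewrite <- HL. apply (proj2 (V1 G q' HG Hq')).
    + intros a a' Ha Ha' Hg. unfold H, H'.
      assert (Hqa: In (q ++ [a]) (hist n G (length (q ++ [a])))) by (apply hist_snoc; auto).
      assert (Hqa': In (q' ++ [a']) (hist n G (length (q' ++ [a'])))) by (apply hist_snoc; auto; rewrite HL; auto).
      assert (Lqa: length (q ++ [a]) = S k) by (rewrite length_app; simpl; unfold k; lia).
      rewrite <- Lqa. apply IHr; auto.
      * destruct HR as [HR1 HR2]. split. rewrite !length_app; simpl; lia.
        intros k' o Hk' Ho Hgo. rewrite length_app in Hk'; simpl in Hk'.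
        destruct (Nat.lt_ge_cases k' k).
        -- rewrite !nth_snoc_lt by lia. apply HR2; auto.
        -- assert (k' = k) by lia. subst k'. unfold k at 1. rewrite nth_snoc_eq.
           rewrite <- HL at 2. rewrite nth_snoc_eq. apply Hg; auto.
      * rewrite Lqa. lia.
      * intros e e' He He' HRe. apply HF.
        -- cbn [ext]. apply in_flat_map. exists a; split; auto. apply in_map. rewrite Lqa in He. auto.
        -- cbn [ext]. apply in_flat_map. exists a'; split; auto. apply in_map. rewrite Lqa in He'. auto.
        -- rewrite <- !app_assoc in HRe. simpl in HRe. auto.
Qed.


Definition ucst (beta alpha pi : R) : R := Rabs beta + 1 + Rabs alpha + Rabs pi.

Lemma pair_bound beta alpha pi x y : Rabs (pair_utility beta alpha pi x y) <= ucst beta alpha pi.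
Proof.
  unfold pair_utility, ucst.
  pose proof (Rabs_pos beta); pose proof (Rabs_pos alpha); pose proof (Rabs_pos pi).
  destruct x, y; simpl; unfold Rabs at 1; destruct (Rcase_abs _);
  repeat match goal with |- context [Rabs ?z] => idtac end;
  pose proof (Rle_abs beta); pose proof (Rle_abs alpha); pose proof (Rle_abs pi);
  pose proof (Rle_abs (-beta)); pose proof (Rle_abs (-alpha)); pose proof (Rle_abs (-pi));
  rewrite ?Rabs_Ropp in *; lra.
Qed.

Lemma ru_bound n beta alpha pi g a i :
  Rabs (round_utility n beta alpha pi g a i) <= INR n * ucst beta alpha pi.
Proof.
  unfold round_utility. eapply Rle_trans. apply sum_over_abs.
  eapply Rle_trans. apply sum_over_const_le. intros; apply pair_bound.
  apply Rmult_le_compat_r. unfold ucst; pose proof (Rabs_pos beta); pose proof (Rabs_pos alpha); pose proof (Rabs_pos pi); lra.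
  apply le_INR. apply nbrs_length.
Qed.

Lemma eru_bound n Gs K tau G beta alpha pi (q : Hist) i t :
  valid_prot n Gs K tau -> Gs G -> In q (hist n G (length q)) ->
  Rabs (exp_round_utility n beta alpha pi tau G q i t) <= INR n * ucst beta alpha pi.
Proof.
  intros Hv HG Hq. unfold exp_round_utility.
  destruct (ext_norm n Gs K tau G Hv HG (S t) q Hq) as [Hs Hn].
  eapply Rle_trans. apply sum_over_abs.
  eapply Rle_trans. apply (sum_over_le _ _ (fun e => prob_ext n tau G q e * (INR n * ucst beta alpha pi))).
  intros e He. rewrite Rabs_mult. rewrite (Rabs_right (prob_ext _ _ _ _ _)) by (apply Rle_ge; auto).
  apply Rmult_le_compat_l; auto. apply ru_bound.
  rewrite sum_over_scal_r. rewrite Hs. lra.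
Qed.

Definition coopA (n : nat) (g : Graph) (o : nat) : Action := repeat Coop (deg n g o).
Definition coopP (n : nat) (g : Graph) : Profile := map (fun o => coopA n g o) (seq 0 n).
Definition coopH (n : nat) (G : EG) (m : nat) : Hist := map (fun k => coopP n (G k)) (seq 0 m).

Lemma nth_map_seq {A} (f : nat -> A) len t d : (t < len)%nat -> nth t (map f (seq 0 len)) d = f t.
Proof. intros H. rewrite nth_indep with (d' := f 0%nat) by (rewrite length_map, length_seq; auto).
  rewrite map_nth, seq_nth; auto. Qed.

Lemma coopP_RP n G k : In (coopP n (G k)) (round_profiles n G k).
Proof. apply RP_iff. split. unfold coopP; rewrite length_map, length_seq; auto.
  intros o Ho. unfold coopP. rewrite nth_map_seq by auto. unfold coopA. apply repeat_length. Qed.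

Lemma coopH_len n G m : length (coopH n G m) = m.
Proof. unfold coopH. rewrite length_map, length_seq; auto. Qed.

Lemma coopH_hist n G m : In (coopH n G m) (hist n G (length (coopH n G m))).
Proof. rewrite coopH_len. apply hist_iff. split. apply coopH_len.
  intros t Ht. unfold coopH. rewrite nth_map_seq by auto. apply RP_iff. apply coopP_RP. Qed.

Lemma coopP_allcoop n g : Forall (Forall (fun x => x = Coop)) (coopP n g).
Proof. unfold coopP. apply Forall_forall. intros x Hx. apply in_map_iff in Hx. destruct Hx as [o [<- _]].
  unfold coopA. apply Forall_forall. intros y Hy. apply repeat_spec in Hy; auto. Qed.

Lemma coopH_allcoop n G m : all_coop (coopH n G m).
Proof. unfold all_coop, coopH. apply Forall_forall. intros x Hx. apply in_map_iff in Hx.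
  destruct Hx as [k [<- _]]. apply coopP_allcoop. Qed.

Lemma allcoop_action (x : Action) d : Forall (fun y => y = Coop) x -> length x = d -> x = repeat Coop d.
Proof. revert d; induction x; intros d Hf Hl; simpl in *; subst; auto.
  inversion Hf; subst. simpl. f_equal. apply IHx; auto. Qed.

Lemma all_coop_snoc (q : Hist) a : all_coop q -> Forall (Forall (fun x => x = Coop)) a -> all_coop (q ++ [a]).
Proof. intros; unfold all_coop in *. apply Forall_app; split; auto. Qed.

Lemma all_coop_nth (q : Hist) k o : all_coop q -> Forall (fun x => x = Coop) (nth o (nth k q []) []).
Proof. intros H. unfold all_coop in H. destruct (Nat.lt_ge_cases k (length q)).
  - assert (Hk: Forall (Forall (fun x => x = Coop)) (nth k q [])) by (rewrite Forall_forall in H; apply H; apply nth_In; auto).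
    destruct (Nat.lt_ge_cases o (length (nth k q []))).
    + rewrite Forall_forall in Hk. apply Hk. apply nth_In; auto.
    + rewrite nth_overflow; auto.
  - rewrite (nth_overflow q) by auto. destruct o; simpl; auto.
Qed.


Lemma E0_point n Gs K tau G beta alpha pi (q : Hist) i (c : Profile) :
  valid_prot n Gs K tau -> Gs G -> In q (hist n G (length q)) ->
  In c (round_profiles n G (length q)) ->
  prod_over (seq 0 n) (fun o => tau o G q (nth o c [])) = 1 ->
  exp_round_utility n beta alpha pi tau G q i 0 = round_utility n beta alpha pi (G (length q)) c i.
Proof.
  intros Hv HG Hq Hc Hw. unfold exp_round_utility. rewrite sum_ext_S'. simpl ext.
  rewrite (sum_over_ext _ _ (fun a => prod_over (seq 0 n) (fun o => tau o G q (nth o a [])) *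
          round_utility n beta alpha pi (G (length q)) a i)).
  - apply (point_mass _ (fun a => prod_over (seq 0 n) (fun o => tau o G q (nth o a []))) (fun a => round_utility n beta alpha pi (G (length q)) a i) c); auto.
    + intros a Ha. eapply prob_nonneg_RP; eauto.
    + apply (norm_RP n G (length q) (fun o => tau o G q)). intros o Ho.
      destruct (Hv o Ho) as [V1 _]. apply (proj2 (V1 G q HG Hq)).
  - intros a Ha. unfold sum_over. simpl. rewrite Nat.add_0_r. rewrite Rmult_1_r, Rplus_0_r. reflexivity.
Qed.

Definition devP (n i j : nat) (g : Graph) : Profile :=
  map (fun o => if Nat.eqb o i then swapA n i j g (coopA n g i) else coopA n g o) (seq 0 n).

Lemma devP_RP n i j G k : In (devP n i j (G k)) (round_profiles n G k).
Proof. apply RP_iff. split. unfold devP; rewrite length_map, length_seq; auto.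
  intros o Ho. unfold devP. rewrite nth_map_seq by auto. destruct (Nat.eqb_spec o i).
  subst. rewrite swapA_length. apply repeat_length. apply repeat_length. Qed.

Lemma nbrs_nodup n g i : NoDup (nbrs n g i).
Proof. apply NoDup_filter. apply seq_NoDup. Qed.

Lemma sum_over_single (L : list nat) j : NoDup L -> In j L ->
  sum_over L (fun l => if Nat.eqb l j then 1 else 0) = 1.
Proof.
  intros Hnd Hj. destruct (in_split _ _ Hj) as [l1 [l2 ->]].
  apply NoDup_remove_2 in Hnd.
  rewrite sum_over_app, sum_over_cons, Nat.eqb_refl.
  rewrite (sum_over_ext l1 _ (fun _ => 0)), (sum_over_ext l2 _ (fun _ => 0)), !sum_over_zero. lra.
  - intros x Hx. destruct (Nat.eqb_spec x j); auto. subst. exfalso; apply Hnd; apply in_or_app; auto.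
  - intros x Hx. destruct (Nat.eqb_spec x j); auto. subst. exfalso; apply Hnd; apply in_or_app; auto.
Qed.

Lemma u_dev n beta alpha pi i j (g : Graph) :
  wf_graph n g -> (i < n)%nat -> (j < n)%nat -> g i j = true ->
  round_utility n beta alpha pi g (devP n i j g) i = round_utility n beta alpha pi g (coopP n g) i + 1.
Proof.
  intros [Hsym [Hirr Hin]] Hi Hj Hij. unfold round_utility.
  rewrite <- (sum_over_single (nbrs n g i) j) by (apply nbrs_nodup || (apply in_nbrs; auto)).
  rewrite <- sum_over_plus. apply sum_over_ext. intros l Hl. apply in_nbrs in Hl. destruct Hl as [Hl Hgl].
  assert (l <> i) by (intros ->; rewrite Hirr in Hgl; discriminate).
  unfold devP, coopP. rewrite !nth_map_seq by auto. rewrite Nat.eqb_refl.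
  apply Nat.eqb_neq in H. rewrite H.
  destruct (Nat.eqb_spec l j).
  - subst l. rewrite act_swapA_j; auto. 2:{ unfold coopA. apply repeat_length. }
    unfold act_toward at 1 3. unfold coopA. rewrite nth_repeat_lt.
    + unfold pair_utility. simpl. ring.
    + unfold deg. apply index_of_lt. apply in_nbrs; auto.
  - rewrite act_swapA_other; auto. ring.
Qed.


Lemma Rabs_le_inv a b : Rabs a <= b -> - b <= a <= b.
Proof. intros H. pose proof (Rle_abs a). pose proof (Rle_abs (- a)). rewrite Rabs_Ropp in *. lra. Qed.

Lemma series_value_eq f l : infinite_sum f l -> series_value f = l.
Proof.
  intros H. unfold series_value. destruct (excluded_middle_informative _) as [E|E].
  - destruct (constructive_indefinite_description _ E) as [l' Hl']. simpl. eapply uniqueness_sum; eauto.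
  - exfalso; apply E; eauto.
Qed.

Lemma cv_const c : Un_cv (fun _ => c) c.
Proof. intros eps He. exists 0%nat. intros. unfold Rdist. rewrite Rminus_diag, Rabs_R0. lra. Qed.

Lemma series_exists f B d : 0 < d < 1 -> 0 <= B -> (forall t, Rabs (f t) <= B * d ^ t) ->
  exists l, infinite_sum f l.
Proof.
  intros Hd HB Hf.
  assert (Hgeo: infinite_sum (fun t => 2 * B * d ^ t) (2 * B * / (1 - d))).
  { pose proof (GP_infinite d ltac:(rewrite Rabs_right; lra)) as Hg. unfold Pser in Hg.
    intros eps He. destruct (Req_dec B 0) as [HB0|HB0].
    - exists 0%nat. intros n _. rewrite HB0. unfold Rdist.
      rewrite (sum_eq _ (fun _ => 0)) by (intros; ring). rewrite sum_cte. rewrite Rmult_0_l, Rmult_0_r, Rmult_0_l, Rminus_0_r, Rabs_R0. auto.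
    - destruct (Hg (eps / (2 * B)) ltac:(apply Rdiv_lt_0_compat; lra)) as [N HN].
      exists N. intros n Hn. specialize (HN n Hn). unfold Rdist in *.
      rewrite (sum_eq _ (fun t => (1 * d ^ t) * (2 * B))) by (intros; ring).
      rewrite <- scal_sum.
      replace (2 * B * sum_f_R0 (fun t => 1 * d ^ t) n - 2 * B * / (1 - d)) with
        ((2 * B) * (sum_f_R0 (fun t => 1 * d ^ t) n - / (1 - d))) by ring.
      rewrite Rabs_mult, Rabs_right by lra.
      apply Rmult_lt_reg_l with (/ (2 * B)). apply Rinv_0_lt_compat; lra.
      rewrite <- Rmult_assoc, Rinv_l by lra. rewrite Rmult_1_l.
      unfold Rdiv in HN. rewrite Rmult_comm in HN. auto. }
  destruct (Rseries_CV_comp (fun t => f t + B * d ^ t) (fun t => 2 * B * d ^ t)) as [l Hl].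
  - intros t. specialize (Hf t). apply Rabs_le_inv in Hf. lra.
  - exists (2 * B * / (1 - d)). exact Hgeo.
  - exists (l - B * / (1 - d)).
    assert (HB2: infinite_sum (fun t => B * d ^ t) (B * / (1 - d))).
    { intros eps He. destruct (Hgeo (2 * eps) ltac:(lra)) as [N HN]. exists N. intros n Hn.
      specialize (HN n Hn). unfold Rdist in *.
      rewrite (sum_eq (fun t => 2 * B * d ^ t) (fun t => (B * d ^ t) * 2)) in HN by (intros; ring).
      rewrite <- scal_sum in HN.
      replace (2 * sum_f_R0 (fun t => B * d ^ t) n - 2 * B * / (1 - d)) with
        (2 * (sum_f_R0 (fun t => B * d ^ t) n - B * / (1 - d))) in HN by ring.
      rewrite Rabs_mult, (Rabs_right 2) in HN by lra. lra. }
    intros eps He. destruct (Hl (eps/2) ltac:(lra)) as [N1 H1]. destruct (HB2 (eps/2) ltac:(lra)) as [N2 H2].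
    exists (N1 + N2)%nat. intros n Hn. specialize (H1 n ltac:(lia)). specialize (H2 n ltac:(lia)).
    unfold Rdist in *.
    rewrite (sum_eq f (fun t => (f t + B * d ^ t) - B * d ^ t)) by (intros; ring).
    rewrite minus_sum.
    replace (sum_f_R0 (fun t => f t + B * d ^ t) n - sum_f_R0 (fun t => B * d ^ t) n - (l - B * / (1 - d)))
      with ((sum_f_R0 (fun t => f t + B * d ^ t) n - l) - (sum_f_R0 (fun t => B * d ^ t) n - B * / (1 - d))) by ring.
    eapply Rle_lt_trans. apply Rabs_triang. rewrite Rabs_Ropp. lra.
Qed.

Definition tailI (rho : nat) (d : R) (t : nat) : R := if Nat.leb rho t then d ^ t else 0.

Lemma tail_closed rho d : 0 < d < 1 -> forall N,
  sum_f_R0 (tailI rho d) N = if Nat.leb rho N then (d ^ rho - d ^ (S N)) / (1 - d) else 0.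
Proof.
  intros Hd. induction N.
  - simpl. unfold tailI. destruct (Nat.leb rho 0) eqn:E; auto.
    apply Nat.leb_le in E. assert (rho = 0%nat) by lia. subst. simpl. field. lra.
  - simpl sum_f_R0. rewrite IHN. unfold tailI.
    destruct (Nat.leb rho N) eqn:E1; destruct (Nat.leb rho (S N)) eqn:E2;
      try (apply Nat.leb_le in E1); try (apply Nat.leb_le in E2);
      try (apply Nat.leb_gt in E1); try (apply Nat.leb_gt in E2); try lia.
    + simpl. field. lra.
    + assert (rho = S N) by lia. subst. simpl. field. lra.
    + lra.
Qed.

Lemma tail_bound rho d N : 0 < d < 1 -> sum_f_R0 (tailI rho d) N <= d ^ rho / (1 - d).
Proof.
  intros Hd. rewrite tail_closed by auto. destruct (Nat.leb rho N).
  - unfold Rdiv. apply Rmult_le_compat_r. apply Rlt_le, Rinv_0_lt_compat; lra.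
    pose proof (pow_le d (S N) ltac:(lra)). lra.
  - unfold Rdiv. apply Rmult_le_pos. apply pow_le; lra. apply Rlt_le, Rinv_0_lt_compat; lra.
Qed.

Lemma diff_bound (X Y : nat -> R) lx ly B d rho : 0 < d < 1 -> 0 <= B -> (1 <= rho)%nat ->
  infinite_sum X lx -> infinite_sum Y ly ->
  Y 0%nat - X 0%nat = 1 ->
  (forall t, (1 <= t)%nat -> (t < rho)%nat -> Y t = X t) ->
  (forall t, (rho <= t)%nat -> Rabs (Y t - X t) <= 2 * B * d ^ t) ->
  ly - lx >= 1 - 2 * B * (d ^ rho / (1 - d)).
Proof.
  intros Hd HB Hr HX HY H0 Hmid Htail.
  assert (Hlow: forall N, 1 - 2 * B * (d ^ rho / (1 - d)) <= sum_f_R0 (fun t => Y t - X t) N).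
  { intros N. eapply Rle_trans with (sum_f_R0 (fun t => (if Nat.eqb t 0 then 1 else 0) - 2 * B * tailI rho d t) N).
    - rewrite minus_sum. rewrite (sum_eq (fun t => 2 * B * tailI rho d t) (fun t => tailI rho d t * (2 * B))) by (intros; ring).
      rewrite <- scal_sum.
      assert (E: sum_f_R0 (fun t => if Nat.eqb t 0 then 1 else 0) N = 1).
      { induction N. simpl; auto. simpl. rewrite IHN. lra. }
      rewrite E. pose proof (tail_bound rho d N Hd). rewrite Rmult_comm. nra.
    - apply sum_Rle. intros t Ht. unfold tailI.
      destruct (Nat.eqb_spec t 0).
      + subst. destruct (Nat.leb rho 0) eqn:E. apply Nat.leb_le in E; lia. lra.
      + destruct (Nat.leb rho t) eqn:E.
        * apply Nat.leb_le in E. specialize (Htail t E). apply Rabs_le_inv in Htail. lra.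
        * apply Nat.leb_gt in E. rewrite (Hmid t) by lia. lra. }
  assert (Hcv: Un_cv (fun N => sum_f_R0 (fun t => Y t - X t) N) (ly - lx)).
  { eapply Un_cv_ext. intros N. symmetry. apply minus_sum. apply CV_minus; auto. }
  apply Rle_ge. eapply Rle_cv_lim. exact Hlow. apply cv_const. exact Hcv.
Qed.


Lemma prob_pos n Gs K tau G : valid_prot n Gs K tau -> Gs G ->
  (forall o G p a, (o < n)%nat -> Gs G -> In p (hist n G (length p)) ->
     In a (all_lists (deg n (G (length p)) o)) -> 0 < tau o G p a) ->
  forall r (q : Hist), In q (hist n G (length q)) ->
  forall e, In e (ext n G (length q) r) -> 0 < prob_ext n tau G q e.
Proof.
  intros Hv HG Hpos. induction r; intros q Hq e He.
  - destruct He as [<-|[]]. simpl; lra.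
  - cbn [ext] in He. apply in_flat_map in He. destruct He as [a [Ha He]].
    apply in_map_iff in He. destruct He as [e' [<- He']]. cbn [prob_ext].
    apply Rmult_lt_0_compat.
    + apply prod_over_pos. intros o Ho. apply in_seq in Ho. apply Hpos; auto. lia.
      apply all_lists_iff. apply RP_iff in Ha. apply Ha. lia.
    + apply IHr. apply hist_snoc; auto. rewrite length_app; simpl. rewrite Nat.add_1_r; auto.
Qed.

Lemma prod_cv (l : list nat) (f : nat -> nat -> R) g :
  (forall x, In x l -> Un_cv (fun c => f c x) (g x)) ->
  Un_cv (fun c => prod_over l (f c)) (prod_over l g).
Proof.
  induction l; intros H.
  - unfold prod_over; simpl. apply cv_const.
  - unfold prod_over in *; simpl. apply CV_mult. apply H; left; auto. apply IHl. intros; apply H; right; auto.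
Qed.

Lemma sum_if_cv {A} (L : list A) (P : A -> Prop) (u : nat -> A -> R) v :
  (forall x, In x L -> P x -> Un_cv (fun c => u c x) (v x)) ->
  Un_cv (fun c => sum_if L P (u c)) (sum_if L P v).
Proof.
  induction L; intros H.
  - unfold sum_if, sum_over; simpl. apply cv_const.
  - unfold sum_if, sum_over in *; simpl. apply CV_plus.
    + destruct (excluded_middle_informative (P a)). apply H; auto; left; auto. apply cv_const.
    + apply IHL. intros; apply H; auto; right; auto.
Qed.

Lemma prob_cv n (Gs : EG -> Prop) (sc : nat -> Protocol) sigma G : Gs G ->
  (forall o G p a, (o < n)%nat -> Gs G -> In p (hist n G (length p)) ->
     In a (all_lists (deg n (G (length p)) o)) -> Un_cv (fun c => sc c o G p a) (sigma o G p a)) ->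
  (forall G p o, Gs G -> In p (hist n G (length p)) -> all_coop p -> (o < n)%nat ->
     sigma o G p (repeat Coop (deg n (G (length p)) o)) = 1) ->
  forall r (q : Hist), In q (hist n G (length q)) -> all_coop q ->
  forall e, In e (ext n G (length q) r) -> all_coop e -> Un_cv (fun c => prob_ext n (sc c) G q e) 1.
Proof.
  intros HG Hcv Hc1. induction r; intros q Hq Hcq e He Hce.
  - destruct He as [<-|[]]. simpl. apply cv_const.
  - cbn [ext] in He. apply in_flat_map in He. destruct He as [a [Ha He]].
    apply in_map_iff in He. destruct He as [e' [<- He']]. cbn [prob_ext].
    unfold all_coop in Hce. inversion Hce; subst.
    rewrite <- (Rmult_1_l 1). apply CV_mult.
    + rewrite <- (prod_over_one (seq 0 n) (fun o => sigma o G q (nth o a []))).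
      * apply (prod_cv _ (fun c o => sc c o G q (nth o a []))). intros o Ho. apply in_seq in Ho.
        apply Hcv; auto. lia. apply all_lists_iff. apply RP_iff in Ha. apply Ha. lia.
      * intros o Ho. apply in_seq in Ho. apply RP_iff in Ha.
        rewrite (allcoop_action (nth o a []) (deg n (G (length q)) o)).
        apply Hc1; auto. lia.
        destruct (Nat.lt_ge_cases o (length a)).
        -- rewrite Forall_forall in H1. apply H1. apply nth_In; auto.
        -- rewrite nth_overflow; auto.
        -- apply Ha. lia.
    + apply IHr. apply hist_snoc; auto. apply all_coop_snoc; auto.
      rewrite length_app; simpl. rewrite Nat.add_1_r; auto. auto.
Qed.

Lemma obs_refl n K i G p : obs_equiv n K i G p G p.
Proof. split; auto. split. intros; tauto. intros; split; auto. Qed.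

Lemma beliefs_point n Gs K beta alpha pi delta sigma mu G i m :
  (forall G, Gs G -> forall m, wf_graph n (G m)) -> Gs G -> (i < n)%nat ->
  (forall G p o, Gs G -> In p (hist n G (length p)) -> all_coop p -> (o < n)%nat ->
     sigma o G p (repeat Coop (deg n (G (length p)) o)) = 1) ->
  consistent_beliefs n Gs K sigma mu ->
  forall tau, util_info n K beta alpha pi delta mu tau G i G (coopH n G m) =
              util n beta alpha pi delta tau G (coopH n G m) i.
Proof.
  intros HGs HG Hi Hc1 [sc [Hcm [Hcv Hmu]]] tau.
  set (p0 := coopH n G m).
  set (L := hist n G (length p0)).
  set (Pr := fun p => obs_equiv n K i G p G p0).
  assert (Hp0: In p0 (hist n G (length p0))) by apply coopH_hist.
  assert (Hvc: forall c, valid_prot n Gs K (sc c)) by (intros c o Ho; apply (Hcm c o Ho)).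
  assert (Hnil: In (@nil Profile) (hist n G (length (@nil Profile)))) by (simpl; left; auto).
  set (P := fun c p => prob_hist n (sc c) G p).
  assert (Hnorm: forall c, sum_over L (P c) = 1 /\ forall p, In p L -> 0 <= P c p).
  { intros c. apply (ext_norm n Gs K (sc c) G (Hvc c) HG (length p0) [] Hnil). }
  set (D := fun c => sum_if L Pr (P c)).
  assert (HD1: forall c, D c <= 1).
  { intros c. destruct (Hnorm c) as [A B]. rewrite <- A. unfold D, sum_if. apply sum_over_le.
    intros x Hx. destruct (excluded_middle_informative _); auto. lra. }
  destruct (in_split _ _ Hp0) as [l1 [l2 HLs]].
  assert (Hsplit: forall (f : Hist -> R), (forall p, In p L -> Pr p -> 0 <= f p) ->
     f p0 <= sum_if L Pr f).
  { intros f Hf. unfold sum_if. unfold L. rewrite HLs. rewrite sum_over_app, sum_over_cons.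
    destruct (excluded_middle_informative (Pr p0)) as [_|N]; [|exfalso; apply N; apply obs_refl].
    assert (0 <= sum_over l1 (fun x => if excluded_middle_informative (Pr x) then f x else 0)).
    { apply sum_over_nonneg. intros x Hx. destruct (excluded_middle_informative _); [|lra].
      apply Hf; auto. unfold L; rewrite HLs; apply in_or_app; auto. }
    assert (0 <= sum_over l2 (fun x => if excluded_middle_informative (Pr x) then f x else 0)).
    { apply sum_over_nonneg. intros x Hx. destruct (excluded_middle_informative _); [|lra].
      apply Hf; auto. unfold L; rewrite HLs; apply in_or_app; right; right; auto. }
    lra. }
  assert (HP0pos: forall c, 0 < P c p0).
  { intros c. unfold P, prob_hist. apply (prob_pos n Gs K (sc c) G (Hvc c) HG) with (r := length p0) (q := []); auto.
    intros o G' p a Ho HG' Hp Ha. apply (proj2 (Hcm c o Ho)); auto. }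
  assert (HPD: forall c, P c p0 <= D c).
  { intros c. apply Hsplit. intros p Hp _. apply (proj2 (Hnorm c)); auto. }
  set (rc := fun c p => P c p / D c).
  assert (Hrc: forall p, In p L -> Pr p -> Un_cv (fun c => rc c p) (mu G i G p0 p)).
  { intros p Hp Hpr. apply Hmu; auto. }
  assert (Hrc_nn: forall c p, In p L -> 0 <= rc c p).
  { intros c p Hp. unfold rc. unfold Rdiv. apply Rmult_le_pos. apply (proj2 (Hnorm c)); auto.
    apply Rlt_le, Rinv_0_lt_compat. specialize (HP0pos c); specialize (HPD c); lra. }
  assert (Hsum1: forall c, sum_if L Pr (rc c) = 1).
  { intros c. unfold rc, sum_if. rewrite (sum_over_ext _ _ (fun x => (if excluded_middle_informative (Pr x) then P c x else 0) * / D c)).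
    rewrite sum_over_scal_r. change (D c * / D c = 1). apply Rinv_r.
    specialize (HP0pos c); specialize (HPD c); lra.
    intros x _. destruct (excluded_middle_informative _); unfold Rdiv; lra. }
  assert (Hmu_nn: forall p, In p L -> Pr p -> 0 <= mu G i G p0 p).
  { intros p Hp Hpr. apply (Rle_cv_lim (Un := fun _ => 0) (Vn := fun c => rc c p)); auto. apply cv_const. }
  assert (Hmu_sum: sum_if L Pr (mu G i G p0) = 1).
  { apply (UL_sequence (fun c => sum_if L Pr (rc c))). apply sum_if_cv; auto.
    eapply Un_cv_ext. intros c. symmetry. apply Hsum1. apply cv_const. }
  assert (Hmu0: mu G i G p0 p0 = 1).
  { assert (Hcv0: Un_cv (fun c => P c p0) 1).
    { unfold P, prob_hist. apply (prob_cv n Gs sc sigma G HG) with (r := length p0); auto.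
      all: try (unfold all_coop; auto; fail). all: try exact Hp0. apply coopH_allcoop. }
    apply Rle_antisym.
    - apply (Rle_cv_lim (Un := fun c => rc c p0) (Vn := fun _ => 1)); auto.
      intros c. unfold rc. specialize (HP0pos c); specialize (HPD c).
      unfold Rdiv. apply Rmult_le_reg_r with (D c). lra. rewrite Rmult_assoc, Rinv_l by lra. lra.
      apply Hrc; auto. apply obs_refl. apply cv_const.
    - apply (Rle_cv_lim (Un := fun c => P c p0) (Vn := fun c => rc c p0)); auto.
      intros c. unfold rc. specialize (HP0pos c); specialize (HPD c); specialize (HD1 c).
      unfold Rdiv. apply Rmult_le_reg_r with (D c). lra. rewrite Rmult_assoc, Rinv_l by lra.
      rewrite Rmult_1_r. nra.
      apply Hrc; auto. apply obs_refl. }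
  assert (Hzero: forall x, In x (l1 ++ l2) -> (if excluded_middle_informative (Pr x) then mu G i G p0 x else 0) = 0).
  { apply sum_over_nonneg_zero.
    - intros x Hx. destruct (excluded_middle_informative _); [|lra]. apply Hmu_nn; auto.
      unfold L; rewrite HLs. apply in_app_or in Hx. apply in_or_app. destruct Hx; auto. right; right; auto.
    - unfold sum_if in Hmu_sum. unfold L in Hmu_sum. rewrite HLs in Hmu_sum. rewrite sum_over_app, sum_over_cons in Hmu_sum.
      rewrite sum_over_app.
      destruct (excluded_middle_informative (Pr p0)) as [_|N]; [|exfalso; apply N; apply obs_refl]. lra. }
  unfold util_info, sum_if. rewrite HLs. rewrite sum_over_app, sum_over_cons.
  rewrite Hmu0. rewrite (sum_over_ext l1 _ (fun _ => 0)), (sum_over_ext l2 _ (fun _ => 0)), !sum_over_zero.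
  destruct (excluded_middle_informative (obs_equiv n K i G p0 G p0)) as [_|N]; [lra|exfalso; apply N; apply obs_refl].
  - intros x Hx. specialize (Hzero x ltac:(apply in_or_app; auto)). unfold Pr in Hzero.
    destruct (excluded_middle_informative _); [rewrite Hzero; lra|reflexivity].
  - intros x Hx. specialize (Hzero x ltac:(apply in_or_app; auto)). unfold Pr in Hzero.
    destruct (excluded_middle_informative _); [rewrite Hzero; lra|reflexivity].
Qed.


Lemma last_nth {A} (e : list A) t d : length e = S t -> last e d = nth t e d.
Proof. revert t; induction e as [|x e IH]; intros t H; simpl in *; [discriminate|].
  destruct e as [|y e']. simpl in H. assert (t = 0%nat) by lia. subst; auto.
  destruct t. simpl in H; lia. rewrite (IH t); auto. Qed.

Lemma middle_eq n Gs K sigma i j m rho G beta alpha pi t :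
  (forall G, Gs G -> forall m, wf_graph n (G m)) -> Gs G -> valid_prot n Gs K sigma ->
  knowledge_wf Gs K -> (i < n)%nat -> (j < n)%nat ->
  (forall l m', punishment_opportunity G i j m l m' -> (m + rho <= m')%nat) ->
  (1 <= t)%nat -> (t < rho)%nat ->
  exp_round_utility n beta alpha pi sigma G (coopH n G m) i t =
  exp_round_utility n beta alpha pi (deviate sigma i (devS n i j m sigma)) G (coopH n G m) i t.
Proof.
  intros HGs HG Hv HK Hi Hj HPO Ht1 Ht2.
  unfold exp_round_utility.
  assert (Hp0 := coopH_hist n G m). assert (Hl0 := coopH_len n G m).
  apply (couple n Gs K sigma i j m rho G HGs HG Hv HK Hi Hj HPO); auto.
  - split; auto. intros k o Hk Ho Hg. rewrite phi_id by lia. auto.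
  - rewrite Hl0. lia.
  - intros e e' He He' [_ HR].
    apply ext_iff in He. apply ext_iff in He'. destruct He as [Le _]. destruct He' as [Le' _].
    rewrite !last_nth with (t := t) by auto.
    set (p0 := coopH n G m) in *.
    assert (E1: nth t e [] = nth (length p0 + t) (p0 ++ e) []) by (rewrite app_nth2 by lia; f_equal; lia).
    assert (E2: nth t e' [] = nth (length p0 + t) (p0 ++ e') []) by (rewrite app_nth2 by lia; f_equal; lia).
    rewrite E1, E2. rewrite Hl0 in *.
    assert (Hk: (m + t < length (p0 ++ e))%nat) by (rewrite length_app; lia).
    unfold round_utility. apply sum_over_ext. intros l Hl. apply in_nbrs in Hl. destruct Hl as [Hl Hgl].
    rewrite (HR (m + t)%nat i) by (auto; left; auto).
    rewrite phi_id by lia.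
    rewrite (HR (m + t)%nat l); auto.
    + rewrite phi_id by lia. auto.
    + right. intros Hin. assert (m + rho <= m + t)%nat; [|lia]. apply (HPO l). split; auto.
Qed.

Theorem theorem1 (n : nat) (beta alpha pi delta : R)
  (Halpha : 0 <= alpha) (Hdelta : 0 < delta < 1)
  (Gs : EG -> Prop) (HGs : forall G, Gs G -> forall m, wf_graph n (G m))
  (K : Knowledge) (HK : knowledge_wf Gs K) :
  ~ restricted_by_timely_punishments Gs ->
  forall sigma : Protocol, ~ enforces_accountability n Gs K beta alpha pi delta sigma.
Proof.
  intros Hnr sigma [Hc1 [Hv [mu [Hcons Hineq]]]].
  set (B := INR n * ucst beta alpha pi).
  assert (HB: 0 <= B).
  { unfold B, ucst. apply Rmult_le_pos. apply pos_INR.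
    pose proof (Rabs_pos beta); pose proof (Rabs_pos alpha); pose proof (Rabs_pos pi); lra. }
  destruct (pow_lt_1_zero delta ltac:(rewrite Rabs_right; lra) ((1 - delta) / (4 * B + 4)))
    as [N HN].
  { apply Rdiv_lt_0_compat; lra. }
  set (rho := S N).
  destruct (classic (exists G i j m, Gs G /\ G m i j = true /\
     forall l m', punishment_opportunity G i j m l m' -> (m + rho <= m')%nat)) as [Hex|Hno].
  2:{ apply Hnr. exists rho. split. unfold rho; lia. intros G HG i j m He.
      apply NNPP; intros Hn. apply Hno. exists G, i, j, m. split; auto. split; auto.
      intros l m' Hpo. destruct (Nat.le_gt_cases (m + rho) m'); auto.
      exfalso. apply Hn. exists l, m'. split; auto. }
  destruct Hex as [G [i [j [m [HG [Hij HPO]]]]]].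
  destruct (HGs G HG m) as [Hsym [Hirr Hin]].
  destruct (Hin i j Hij) as [Hi Hj].
  assert (Hvs: valid_prot n Gs K sigma) by exact Hv.
  set (s := devS n i j m sigma).
  assert (Hs: valid_strategy n Gs K i s) by (apply dev_valid; auto).
  set (dev := deviate sigma i s).
  assert (Hvd: valid_prot n Gs K dev).
  { intros o Ho. unfold dev, deviate. destruct (Nat.eqb_spec o i). subst; auto. apply Hv; auto. }
  set (p0 := coopH n G m).
  assert (Hp0 : In p0 (hist n G (length p0))) by apply coopH_hist.
  assert (Hl0 : length p0 = m) by apply coopH_len.
  specialize (Hineq G i s G p0 HG Hi Hs HG Hp0 ltac:(exists p0; split; auto; apply obs_refl)).
  rewrite !(beliefs_point n Gs K beta alpha pi delta sigma mu G i m HGs HG Hi Hc1 Hcons) in Hineq.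
  fold s dev p0 in Hineq.
  set (X := fun t => delta ^ t * exp_round_utility n beta alpha pi sigma G p0 i t).
  set (Y := fun t => delta ^ t * exp_round_utility n beta alpha pi dev G p0 i t).
  assert (HXb: forall t, Rabs (X t) <= B * delta ^ t).
  { intros t. unfold X. rewrite Rabs_mult, Rabs_right by (apply Rle_ge, pow_le; lra).
    rewrite Rmult_comm. apply Rmult_le_compat_r. apply pow_le; lra. eapply eru_bound; eauto. }
  assert (HYb: forall t, Rabs (Y t) <= B * delta ^ t).
  { intros t. unfold Y. rewrite Rabs_mult, Rabs_right by (apply Rle_ge, pow_le; lra).
    rewrite Rmult_comm. apply Rmult_le_compat_r. apply pow_le; lra. eapply eru_bound; eauto. }
  destruct (series_exists X B delta Hdelta HB HXb) as [lx Hlx].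
  destruct (series_exists Y B delta Hdelta HB HYb) as [ly Hly].
  assert (Ux: util n beta alpha pi delta sigma G p0 i = lx) by (apply series_value_eq; exact Hlx).
  assert (Uy: util n beta alpha pi delta dev G p0 i = ly) by (apply series_value_eq; exact Hly).
  assert (Hdiff: ly - lx >= 1 - 2 * B * (delta ^ rho / (1 - delta))).
  { apply (diff_bound X Y lx ly B delta rho Hdelta HB ltac:(unfold rho; lia) Hlx Hly).
    - unfold X, Y. simpl pow. rewrite !Rmult_1_l.
      rewrite (E0_point n Gs K sigma G beta alpha pi p0 i (coopP n (G (length p0)))); auto.
      rewrite (E0_point n Gs K dev G beta alpha pi p0 i (devP n i j (G (length p0)))); auto.
      + rewrite Hl0. rewrite u_dev; auto. lra.
      + apply devP_RP.
      + apply prod_over_one. intros o Ho. apply in_seq in Ho. unfold devP. rewrite nth_map_seq by lia.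
        unfold dev, deviate. destruct (Nat.eqb_spec o i).
        * subst o. unfold s, devS. rewrite Hl0, Nat.ltb_irrefl, Nat.eqb_refl.
          rewrite swapA_invol. unfold coopA. rewrite <- Hl0. apply Hc1; auto. apply coopH_allcoop.
        * unfold coopA. apply Hc1; auto. apply coopH_allcoop. lia.
      + apply coopP_RP.
      + apply prod_over_one. intros o Ho. apply in_seq in Ho. unfold coopP. rewrite nth_map_seq by lia.
        unfold coopA. apply Hc1; auto. apply coopH_allcoop. lia.
    - intros t Ht1 Ht2. unfold X, Y. f_equal. symmetry.
      unfold dev, s, p0. apply (middle_eq n Gs K sigma i j m rho G); auto.
    - intros t Ht. unfold X, Y.
      rewrite <- Rmult_minus_distr_l. rewrite Rabs_mult, Rabs_right by (apply Rle_ge, pow_le; lra).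
      assert (A1 := eru_bound n Gs K sigma G beta alpha pi p0 i t Hvs HG Hp0).
      assert (A2 := eru_bound n Gs K dev G beta alpha pi p0 i t Hvd HG Hp0).
      fold B in A1, A2.
      assert (Rabs (exp_round_utility n beta alpha pi dev G p0 i t - exp_round_utility n beta alpha pi sigma G p0 i t) <= 2 * B).
      { eapply Rle_trans. apply Rabs_triang. rewrite Rabs_Ropp. lra. }
      pose proof (pow_le delta t ltac:(lra)). nra. }
  assert (Hsmall: delta ^ rho < (1 - delta) / (4 * B + 4)).
  { specialize (HN rho ltac:(unfold rho; lia)). rewrite Rabs_right in HN; auto. apply Rle_ge, pow_le; lra. }
  assert (Hq: 2 * B * (delta ^ rho / (1 - delta)) < 1 / 2).
  { assert (0 <= delta ^ rho) by (apply pow_le; lra).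
    assert (delta ^ rho / (1 - delta) < 1 / (4 * B + 4)).
    { apply Rmult_lt_reg_r with (1 - delta). lra. unfold Rdiv. rewrite Rmult_assoc, Rinv_l by lra.
      unfold Rdiv in Hsmall. rewrite Rmult_1_r. replace (1 * / (4 * B + 4) * (1 - delta)) with ((1 - delta) * / (4 * B + 4)) by ring. auto. }
    assert (0 <= delta ^ rho / (1 - delta)).
    { unfold Rdiv. apply Rmult_le_pos; auto. apply Rlt_le, Rinv_0_lt_compat; lra. }
    assert (2 * B * / (4 * B + 4) < 1 / 2).
    { apply Rmult_lt_reg_r with (4 * B + 4). lra. rewrite Rmult_assoc, Rinv_l by lra. lra. }
    unfold Rdiv in *. nra. }
  rewrite Ux, Uy in Hineq. lra.
Qed.
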